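(* Let $\mathcal{T}_h$ be a triangulation, $\bm{z}$ a vertex, $\omega_z$ the union of triangles of $\mathcal{T}_h$ having $\bm{z}$ as a vertex, $r\ge0$, and $\bm{q}_z\in\mathcal{P}_{r+1}(\omega_z)^2$. Assume $\Pi_h^r\bm{q}_z=0$ on $\omega_z$. Then $\bm{q}_z=\nabla^\perp w$ for some $w\in\mathcal{P}_{r+2}(\omega_z)$ such that, for every edge $e$ of a triangle in $\omega_z$, $w(\bm{l})=0$ at every Lobatto quadrature point $\bm{l}$ on $e$.
   Context: $\nabla^\perp v=(-\partial_{x_2}v,\partial_{x_1}v)^\intercal$. $\Pi_h^r$ is the canonical Raviart--Thomas interpolant of order $r$: on each triangle $T$, $\Pi_h^r\bm{q}\in\mathcal{RT}_r(T)=\{(v_1,v_2)^\intercal+v_3(x_1,x_2)^\intercal:v_i\in\mathcal{P}_r(T)\}$ with $\int_e(\bm{q}-\Pi_h^r\bm{q})\cdot\bm{n}_ev=0$ for all $v\in\mathcal{P}_r(e)$ on each edge $e$ of $T$ and $\int_T(\bm{q}-\Pi_h^r\bm{q})\cdot\bm{v}=0$ for all $\bm{v}\in\mathcal{P}_{r-1}(T)^2$. The Lobatto points on an edge $e=\overline{\bm{a}\bm{b}}$ are $\bm{l}_j=\bm{a}+(\bm{b}-\bm{a})\hat l_j$, $j=1,\dots,r+2$, where $\hat l_j$ are the zeros of $\frac{d^r}{ds^r}\big(s^{r+1}(1-s)^{r+1}\big)$ (they include the endpoints). *)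

(* Defs.v *)
From Stdlib Require Import Reals List.
From Coquelicot Require Import Coquelicot.
Open Scope R_scope.

Definition pt := (R * R)%type.
Definition padd (p q : pt) : pt := (fst p + fst q, snd p + snd q).
Definition psub (p q : pt) : pt := (fst p - fst q, snd p - snd q).
Definition pscal (s : R) (p : pt) : pt := (s * fst p, s * snd p).
Definition pdot (p q : pt) : R := fst p * fst q + snd p * snd q.
Definition pnorm (p : pt) : R := sqrt (pdot p p).

Definition is_poly2 (k : nat) (f : pt -> R) : Prop :=
  exists c : nat -> nat -> R, forall x : pt,
    f x = sum_f_R0 (fun i => sum_f_R0 (fun j =>
            c i j * fst x ^ i * snd x ^ j) (k - i)) k.

Definition is_poly2_vec (k : nat) (q : pt -> pt) : Prop :=
  is_poly2 k (fun x => fst (q x)) /\ is_poly2 k (fun x => snd (q x)).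

Definition gradperp (w : pt -> R) (x : pt) : pt :=
  (- Derive (fun t => w (fst x, t)) (snd x),
     Derive (fun t => w (t, snd x)) (fst x)).

Definition tri2 := (pt * pt * pt)%type.
Definition tv1 (T : tri2) : pt := fst (fst T).
Definition tv2 (T : tri2) : pt := snd (fst T).
Definition tv3 (T : tri2) : pt := snd T.

Definition tdet (T : tri2) : R :=
  let u := psub (tv2 T) (tv1 T) in let v := psub (tv3 T) (tv1 T) in
  fst u * snd v - snd u * fst v.

Definition nondegenerate (T : tri2) : Prop := tdet T <> 0.

Definition is_vertex (z : pt) (T : tri2) : Prop :=
  z = tv1 T \/ z = tv2 T \/ z = tv3 T.

Definition in_tri (T : tri2) (p : pt) : Prop :=
  exists l1 l2 l3 : R, 0 <= l1 /\ 0 <= l2 /\ 0 <= l3 /\ l1 + l2 + l3 = 1 /\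
    p = padd (pscal l1 (tv1 T)) (padd (pscal l2 (tv2 T)) (pscal l3 (tv3 T))).

Definition in_seg (a b p : pt) : Prop :=
  exists s : R, 0 <= s <= 1 /\ p = padd a (pscal s (psub b a)).

Definition is_edge (T : tri2) (a b : pt) : Prop :=
  (a = tv1 T /\ b = tv2 T) \/ (a = tv2 T /\ b = tv3 T) \/ (a = tv3 T /\ b = tv1 T).

Definition triangulation (Th : list tri2) : Prop :=
  (forall T, In T Th -> nondegenerate T) /\
  (forall T T', In T Th -> In T' Th -> T <> T' ->
     (forall p, ~ (in_tri T p /\ in_tri T' p)) \/
     (exists v, is_vertex v T /\ is_vertex v T' /\
        forall p, (in_tri T p /\ in_tri T' p) <-> p = v) \/
     (exists u v, u <> v /\ is_vertex u T /\ is_vertex u T' /\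
        is_vertex v T /\ is_vertex v T' /\
        forall p, (in_tri T p /\ in_tri T' p) <-> in_seg u v p)).

(* Integral over the edge [a,b] (arc-length measure). *)
Definition edge_int (a b : pt) (g : pt -> R) : R :=
  pnorm (psub b a) * RInt (fun s => g (padd a (pscal s (psub b a)))) 0 1.

(* Integral over the tri2 T (change of variables to the reference tri2). *)
Definition tri_int (T : tri2) (g : pt -> R) : R :=
  Rabs (tdet T) *
  RInt (fun s => RInt (fun t =>
     g (padd (tv1 T) (padd (pscal s (psub (tv2 T) (tv1 T)))
                           (pscal t (psub (tv3 T) (tv1 T)))))) 0 (1 - s)) 0 1.

Definition edge_normal (a b : pt) : pt :=
  let d := psub b a in pscal (/ pnorm d) (snd d, - fst d).

Definition in_RT (r : nat) (p : pt -> pt) : Prop :=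
  exists v1 v2 v3 : pt -> R, is_poly2 r v1 /\ is_poly2 r v2 /\ is_poly2 r v3 /\
    forall x, p x = (v1 x + v3 x * fst x, v2 x + v3 x * snd x).

Definition is_RT_interp (r : nat) (T : tri2) (q p : pt -> pt) : Prop :=
  in_RT r p /\
  (forall a b, is_edge T a b -> forall v : pt -> R, is_poly2 r v ->
     edge_int a b (fun x => pdot (psub (q x) (p x)) (edge_normal a b) * v x) = 0) /\
  (match r with
   | O => True
   | S r' => forall v : pt -> pt, is_poly2_vec r' v ->
       tri_int T (fun x => pdot (psub (q x) (p x)) (v x)) = 0
   end).

(* the polynomial whose zeros are the reference Lobatto points *)
Definition lobatto_poly (r : nat) (s : R) : R :=
  Derive_n (fun s => s ^ (r + 1) * (1 - s) ^ (r + 1)) r s.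

Definition lobatto_point (r : nat) (a b l : pt) : Prop :=
  exists s : R, lobatto_poly r s = 0 /\ l = padd a (pscal s (psub b a)).

(* Main.v *)
Require Import Defs.
From Stdlib Require Import Reals List.
From Coquelicot Require Import Coquelicot.
From Stdlib Require Import Lra Lia FunctionalExtensionality.
Open Scope R_scope.

Lemma isd_plus (f g : R -> R) x df dg :
  is_derive f x df -> is_derive g x dg -> is_derive (fun t => f t + g t) x (df + dg).
Proof. intros; now apply (is_derive_plus f g). Qed.
Lemma isd_minus (f g : R -> R) x df dg :
  is_derive f x df -> is_derive g x dg -> is_derive (fun t => f t - g t) x (df - dg).
Proof. intros; now apply (is_derive_minus f g). Qed.
Lemma isd_mult (f g : R -> R) x df dg :
  is_derive f x df -> is_derive g x dg -> is_derive (fun t => f t * g t) x (df * g x + f x * dg).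
Proof. intros; apply (is_derive_mult f g); auto. intros; apply Rmult_comm. Qed.
Lemma isd_const (c x : R) : is_derive (fun _ => c) x 0.
Proof. apply (is_derive_const c). Qed.
Lemma isd_id (x : R) : is_derive (fun t => t) x 1.
Proof. apply (is_derive_id x). Qed.
Lemma isd_ext (f g : R -> R) (x l l' : R) : (forall t, f t = g t) -> l = l' -> is_derive f x l -> is_derive g x l'.
Proof. intros H <- D; now apply (is_derive_ext f g). Qed.
Lemma isd_scal (f : R -> R) x c df : is_derive f x df -> is_derive (fun t => c * f t) x (c * df).
Proof. apply is_derive_scal. Qed.

Lemma RInt_plus' (f g : R -> R) a b : ex_RInt f a b -> ex_RInt g a b ->
  RInt (fun x => f x + g x) a b = RInt f a b + RInt g a b.
Proof. intros; now apply (RInt_plus f g). Qed.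
Lemma RInt_minus' (f g : R -> R) a b : ex_RInt f a b -> ex_RInt g a b ->
  RInt (fun x => f x - g x) a b = RInt f a b - RInt g a b.
Proof. intros; now apply (RInt_minus f g). Qed.
Lemma RInt_scal' (f : R -> R) a b c : ex_RInt f a b ->
  RInt (fun x => c * f x) a b = c * RInt f a b.
Proof. intros; now apply (RInt_scal f). Qed.
Lemma FTC (f df : R -> R) a b :
  (forall x, is_derive f x (df x)) -> (forall x, continuous df x) ->
  RInt df a b = f b - f a.
Proof. intros H1 H2. apply is_RInt_unique. apply (is_RInt_derive f df); auto. Qed.
Lemma ex_RInt_c (f : R -> R) a b : (forall x, continuous f x) -> ex_RInt f a b.
Proof. intros; apply (ex_RInt_continuous (V:=R_CompleteNormedModule)); auto. Qed.
Lemma RInt_ext' (f g : R -> R) a b : (forall x, f x = g x) -> RInt f a b = RInt g a b.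
Proof. intros H. apply RInt_ext. intros; apply H. Qed.
Ltac Rring := match goal with |- ?a = ?b => change (@eq R a b); ring end.
Ltac Rlra := match goal with |- ?a = ?b => change (@eq R a b); lra end.
Ltac toR := match goal with |- ?a = ?b => change (@eq R a b) end.

Inductive UP : nat -> (R -> R) -> Prop :=
| UPc : forall k c, UP k (fun _ => c)
| UPx : forall k f, UP k f -> UP (S k) (fun s => s * f s)
| UPadd : forall k f g, UP k f -> UP k g -> UP k (fun s => f s + g s).

Lemma UP_ext k f g : UP k f -> (forall x, f x = g x) -> UP k g.
Proof. intros H E. replace g with f; auto. now apply functional_extensionality. Qed.

Lemma UP_S k f : UP k f -> UP (S k) f.
Proof. induction 1. apply UPc. now apply UPx. now apply UPadd. Qed.

Lemma UP_le k k' f : (k <= k')%nat -> UP k f -> UP k' f.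
Proof. induction 1; auto. intros; apply UP_S; auto. Qed.

Lemma UP_scal k c f : UP k f -> UP k (fun s => c * f s).
Proof.
  induction 1.
  - apply UPc.
  - eapply UP_ext. apply UPx, IHUP. intros; simpl; ring.
  - eapply UP_ext. apply UPadd; [apply IHUP1|apply IHUP2]. intros; simpl; ring.
Qed.

Lemma UP_sub k f g : UP k f -> UP k g -> UP k (fun s => f s - g s).
Proof. intros. eapply UP_ext. apply UPadd. apply H. apply (UP_scal _ (-1)), H0. intros; simpl; ring. Qed.

Lemma UP_mul m n f g : UP m f -> UP n g -> UP (m + n) (fun s => f s * g s).
Proof.
  intros H; revert n g. induction H; intros n h Hg.
  - apply (UP_le n). lia. now apply UP_scal.
  - simpl. eapply UP_ext. apply UPx, IHUP, Hg. intros; simpl; ring.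
  - eapply UP_ext. apply UPadd; [apply IHUP1; exact Hg|apply IHUP2; exact Hg]. intros; simpl; ring.
Qed.

Lemma UP_id : UP 1 (fun s => s).
Proof. eapply UP_ext. apply UPx, (UPc 0 1). intros; simpl; ring. Qed.

Lemma UP_pow n : UP n (fun s => s ^ n).
Proof. induction n. exact (UPc 0 1). simpl. now apply UPx. Qed.

Lemma UP_aff a b : UP 1 (fun s => a + b * s).
Proof. eapply UP_ext. apply UPadd. apply (UPc 1 a). apply (UP_scal _ b), UP_id. intros; simpl; ring. Qed.

Lemma UP_comp k f a b : UP k f -> UP k (fun s => f (a + b * s)).
Proof.
  induction 1.
  - apply UPc.
  - apply (UP_mul 1 k (fun s => a + b * s)). apply UP_aff. auto.
  - apply UPadd; auto.
Qed.

Definition UPd k g := match k with O => forall x, g x = 0 | S m => UP m g end.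

Lemma UP_deriv k f : UP k f -> exists f1, UPd k f1 /\ forall x, is_derive f x (f1 x).
Proof.
  induction 1.
  - exists (fun _ => 0). split. destruct k; simpl; auto. apply UPc.
    intros; apply isd_const.
  - destruct IHUP as [f1 [H1 H2]]. exists (fun s => f s + s * f1 s). split.
    + simpl. destruct k.
      * eapply UP_ext. apply H. intros; simpl in H1; rewrite H1; ring.
      * apply UPadd. exact H. now apply UPx.
    + intros x. apply (isd_ext (fun s => s * f s) _ x (1 * f x + x * f1 x)); [intros; reflexivity| ring | apply isd_mult; [apply isd_id| apply H2]].
  - destruct IHUP1 as [f1 [H1 H2]], IHUP2 as [g1 [H3 H4]].
    exists (fun s => f1 s + g1 s). split.
    + destruct k; simpl in *. intros; rewrite H1, H3; ring. now apply UPadd.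
    + intros; now apply isd_plus.
Qed.

Lemma UP_exd k f x : UP k f -> ex_derive f x.
Proof. intros H. destruct (UP_deriv k f H) as [f1 [_ H2]]. eexists; apply H2. Qed.

Lemma UP_cont k f x : UP k f -> continuous f x.
Proof. intros H. apply (ex_derive_continuous (K:=R_AbsRing) (V:=R_NormedModule)). eapply UP_exd; eauto. Qed.

Lemma UP_exRInt k f a b : UP k f -> ex_RInt f a b.
Proof. intros H. apply ex_RInt_c. intros; eapply UP_cont; eauto. Qed.

Lemma UP0 f : UP 0 f -> exists c, forall x, f x = c.
Proof.
  intros H. remember 0%nat as k. induction H.
  - eauto.
  - discriminate.
  - destruct (IHUP1 Heqk) as [c1 E1], (IHUP2 Heqk) as [c2 E2]. exists (c1 + c2); intros; rewrite E1, E2; auto.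
Qed.

Lemma UP_top k f : UP k f -> exists c, UPd k (fun s => f s - c * s ^ k).
Proof.
  induction 1.
  - destruct k.
    + exists c. simpl; intros; ring.
    + exists 0. simpl. eapply UP_ext. apply (UPc k c). intros; simpl; ring.
  - destruct IHUP as [c Hc]. exists c. simpl. destruct k.
    + simpl in Hc. eapply UP_ext. apply (UPc 0 0). intros x; simpl.
      specialize (Hc x). simpl in Hc. assert (f x = c) by lra. rewrite H0. ring.
    + simpl in Hc. eapply UP_ext. apply UPx, Hc. intros; simpl; ring.
  - destruct IHUP1 as [c1 H1], IHUP2 as [c2 H2]. exists (c1 + c2). destruct k; simpl in *.
    + intros x; specialize (H1 x); specialize (H2 x). lra.
    + eapply UP_ext. apply UPadd. apply H1. apply H2. intros; simpl; ring.
Qed.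

Lemma locally_interval (a b x : R) : a < x < b -> locally x (fun y => a < y < b).
Proof.
  intros Hx. apply (open_and (fun y => a < y) (fun y => y < b)).
  apply open_gt. apply open_lt. exact Hx.
Qed.

Lemma UIT k f a b : UP k f -> a < b -> (forall x, a < x < b -> f x = 0) -> forall x, f x = 0.
Proof.
  revert f. induction k; intros f Hf Hab Hz x.
  - destruct (UP0 f Hf) as [c Hc]. rewrite Hc. rewrite <- (Hc ((a+b)/2)). apply Hz. lra.
  - destruct (UP_deriv _ _ Hf) as [f1 [H1 H2]]. simpl in H1.
    assert (Z1 : forall y, f1 y = 0).
    { apply (IHk f1 H1 Hab). intros y Hy.
      assert (D : is_derive f y 0).
      { apply (is_derive_ext_loc (fun _ => 0)). 
        generalize (locally_interval a b y Hy). apply filter_imp. intros; symmetry; auto.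
        apply isd_const. }
      rewrite <- (is_derive_unique f y _ (H2 y)). now apply is_derive_unique. }
    set (x0 := (a+b)/2).
    assert (E : RInt f1 x0 x = f x - f x0).
    { apply FTC. auto. intros; eapply UP_cont; eauto. }
    rewrite (RInt_ext _ (fun _ => 0)) in E. 2: intros; auto.
    rewrite RInt_const in E. rewrite (Hz x0) in E. 2: unfold x0; lra.
    change (scal (x - x0) 0) with ((x - x0) * 0) in E. lra.
Qed.

Lemma RInt_zero a b : RInt (fun _ => 0) a b = 0.
Proof. rewrite RInt_const. apply Rmult_0_r. Qed.

Lemma UPd_UP k g : UPd k g -> UP k g.
Proof. destruct k; simpl; intros H. eapply UP_ext. apply (UPc 0 0). intros; rewrite H; auto. now apply UP_S. Qed.

Lemma pos_int (f : R -> R) a b : a < b -> (forall x, continuous f x) ->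
  (forall x, a <= x <= b -> 0 <= f x) -> RInt f a b = 0 -> forall x, a <= x <= b -> f x = 0.
Proof.
  intros Hab Hc Hp HI x Hx.
  destruct (Rle_lt_or_eq_dec 0 (f x) (Hp x Hx)) as [Hlt|Heq]; [|auto].
  exfalso.
  assert (Hl : locally x (fun y => 0 < f y)).
  { apply (Hc x (fun y => 0 < y)). apply (open_gt 0). exact Hlt. }
  destruct Hl as [eps He]. pose proof (cond_pos eps) as Ep.
  set (c := Rmax a (x - eps/2)). set (e := Rmin b (x + eps/2)).
  assert (Hc1 : a <= c /\ c <= b). { unfold c, Rmax; destruct Rle_dec; lra. }
  assert (He1 : a <= e /\ e <= b). { unfold e, Rmin; destruct Rle_dec; lra. }
  assert (Hce : c < e). { unfold c, e, Rmax, Rmin; destruct Rle_dec; destruct Rle_dec; lra. }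
  assert (EX : forall u v, ex_RInt f u v). { intros; apply ex_RInt_c; auto. }
  rewrite <- (RInt_Chasles f a c b) in HI by auto.
  rewrite <- (RInt_Chasles f c e b) in HI by auto.
  change (RInt f a c + (RInt f c e + RInt f e b) = 0) in HI.
  assert (0 <= RInt f a c). { apply RInt_ge_0; auto. lra. intros; apply Hp; lra. }
  assert (0 <= RInt f e b). { apply RInt_ge_0; auto. lra. intros; apply Hp; lra. }
  assert (0 < RInt f c e).
  { apply RInt_gt_0; auto. intros y Hy. apply He. change (Rabs (y - x) < eps).
    apply Rabs_def1; unfold c, e, Rmax, Rmin in Hy; destruct Rle_dec; destruct Rle_dec; lra. }
  lra.
Qed.

Lemma UP_Dn n : forall k f, UP k f -> UP (k - n) (Derive_n f n).
Proof.
  induction n; intros k f H.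
  - eapply UP_ext. rewrite Nat.sub_0_r. exact H. intros; reflexivity.
  - pose proof (IHn k f H) as Hn. destruct (UP_deriv _ _ Hn) as [g1 [G1 G2]].
    assert (E : forall x, Derive_n f (S n) x = g1 x).
    { intros x; simpl. now apply is_derive_unique. }
    destruct (k - n)%nat eqn:Ekn; simpl in G1.
    + replace (k - S n)%nat with 0%nat by lia. eapply UP_ext. apply (UPc 0 0). intros; rewrite E; auto.
    + replace (k - S n)%nat with n0 by lia. eapply UP_ext. exact G1. intros; auto.
Qed.

Lemma UP_exdn k f n x : UP k f -> ex_derive_n f n x.
Proof. intros H. destruct n; simpl; auto. eapply UP_exd. apply (UP_Dn n k f H). Qed.

Lemma isd_aff al be x : is_derive (fun s => al + be * s) x be.
Proof. apply (isd_ext (fun s => al + be * s) _ x (0 + be * 1)). intros; auto. ring.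
  apply isd_plus. apply isd_const. apply isd_scal, isd_id. Qed.

Lemma FL n : forall m g kg al be, (n <= m)%nat -> UP kg g ->
  exists h kh, UP kh h /\ forall x, Derive_n (fun s => (al + be*s)^m * g s) n x = (al + be*x)^(m-n) * h x.
Proof.
  induction n; intros m g kg al be Hnm Hg.
  - exists g, kg. split; auto. intros; simpl; rewrite Nat.sub_0_r; reflexivity.
  - destruct (IHn m g kg al be) as [h [kh [Hh E]]]. lia. auto.
    destruct (UP_deriv _ _ Hh) as [h1 [Hh1 Dh]]. apply UPd_UP in Hh1.
    destruct (m - n)%nat as [|p] eqn:Emn. lia.
    replace (m - S n)%nat with p by lia.
    exists (fun x => INR (S p) * be * h x + (al + be*x) * h1 x), (S kh). split.
    + apply UPadd. apply UP_S. apply UP_scal, Hh. apply (UP_mul 1 kh (fun x => al + be * x)). apply UP_aff. auto.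
    + intros x. simpl. rewrite (Derive_ext _ (fun x => (al + be*x)^(S p) * h x)) by (intros; apply E).
      apply is_derive_unique.
      eapply isd_ext. intros; reflexivity. 2: apply isd_mult. 3: apply Dh.
      2: apply is_derive_pow, isd_aff. simpl. ring.
Qed.

Definition Bf (r : nat) := fun s : R => s ^ (r + 1) * (1 - s) ^ (r + 1).

Lemma Bf_vanish r j : (j < r + 1)%nat -> Derive_n (Bf r) j 0 = 0 /\ Derive_n (Bf r) j 1 = 0.
Proof.
  intros Hj. split.
  - rewrite (Derive_n_ext _ (fun s => (0 + 1 * s) ^ (r+1) * (1 - s) ^ (r+1))).
    2: intros t; unfold Bf; replace (0 + 1 * t) with t by ring; reflexivity.
    destruct (FL j (r+1) (fun s => (1 - s) ^ (r+1)) (r+1) 0 1) as [h [kh [_ E]]]. lia.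
    eapply UP_ext. apply (UP_comp _ (fun s => s ^ (r+1)) 1 (-1)), UP_pow. intros; simpl; f_equal; ring.
    rewrite E. destruct (r + 1 - j)%nat eqn:E2. lia. simpl. ring.
  - rewrite (Derive_n_ext _ (fun s => (1 + -1 * s) ^ (r+1) * s ^ (r+1))).
    2: intros t; unfold Bf; replace (1 + -1 * t) with (1 - t) by ring; ring.
    destruct (FL j (r+1) (fun s => s ^ (r+1)) (r+1) 1 (-1)) as [h [kh [_ E]]]. lia. apply UP_pow.
    rewrite E. destruct (r + 1 - j)%nat eqn:E2. lia. simpl. ring.
Qed.

Lemma Bf_UP r : UP ((r+1)+(r+1)) (Bf r).
Proof.
  apply UP_mul. apply UP_pow.
  eapply UP_ext. apply (UP_comp _ (fun s => s ^ (r+1)) 1 (-1)), UP_pow. intros; simpl; f_equal; ring.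
Qed.

Lemma om_top n : exists h, UPd n h /\ forall s, (1 - s) ^ n = (-1) ^ n * s ^ n + h s.
Proof.
  induction n.
  - exists (fun _ => 0). split. simpl; auto. intros; simpl; ring.
  - destruct IHn as [h [Hh E]]. exists (fun s => (-1)^n * s^n + (1 - s) * h s). split.
    + simpl. apply UPadd. apply UP_scal, UP_pow. destruct n.
      * simpl in Hh. eapply UP_ext. apply (UPc 0 0). intros; rewrite Hh; ring.
      * apply (UP_mul 1 n (fun s => 1 - s)). eapply UP_ext. apply (UP_aff 1 (-1)). intros; simpl; ring. exact Hh.
    + intros s. simpl. rewrite E. ring.
Qed.

Lemma lob_top r : exists l h, l <> 0 /\ UP (r+1) h /\ forall s, lobatto_poly r s = l * s ^ (r+2) + h s.
Proof.
  destruct (om_top (r+1)) as [h [Hh E]].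
  replace (r+1)%nat with (S r) in Hh by lia. simpl in Hh.
  set (N := ((r+1)+(r+1))%nat). set (c0 := (-1)^(r+1)).
  set (hB := fun s => s ^ (r+1) * h s).
  assert (HB : UP ((r+1) + r) hB). { apply UP_mul. apply UP_pow. exact Hh. }
  assert (EB : forall s, Bf r s = c0 * s ^ N + hB s).
  { intros s. unfold Bf, hB, c0, N. rewrite E, (pow_add s (r+1) (r+1)). ring. }
  exists (c0 * (INR (Factorial.fact N) / INR (Factorial.fact (N - r)))), (Derive_n hB r).
  split; [|split].
  - unfold c0. apply Rmult_integral_contrapositive_currified. apply pow_nonzero; lra.
    apply Rmult_integral_contrapositive_currified. apply INR_fact_neq_0. apply Rinv_neq_0_compat, INR_fact_neq_0.
  - replace (r+1)%nat with ((r+1+r) - r)%nat by lia. apply UP_Dn, HB.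
  - intros s. unfold lobatto_poly. fold (Bf r).
    rewrite (Derive_n_ext _ (fun x => c0 * x ^ N + hB x)) by apply EB.
    rewrite (Derive_n_plus (fun x => c0 * x ^ N) hB).
    rewrite Derive_n_scal_l, Derive_n_pow_smalli by (unfold N; lia).
    replace (N - r)%nat with (r+2)%nat by (unfold N; lia). ring.
    apply filter_forall. intros; eapply UP_exdn. apply UP_scal, (UP_pow N).
    apply filter_forall. intros; eapply UP_exdn. apply HB.
Qed.

Lemma lob_0 r : lobatto_poly r 0 = 0.
Proof. apply (Bf_vanish r r). lia. Qed.
Lemma lob_1 r : lobatto_poly r 1 = 0.
Proof. apply (Bf_vanish r r). lia. Qed.

Lemma Bf_dn r j x : is_derive (Derive_n (Bf r) j) x (Derive_n (Bf r) (S j) x).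
Proof. simpl. apply Derive_correct. eapply UP_exd. apply (UP_Dn j _ _ (Bf_UP r)). Qed.

Lemma Bf_dn_cont r j x : continuous (Derive_n (Bf r) j) x.
Proof. eapply UP_cont. apply (UP_Dn j _ _ (Bf_UP r)). Qed.

Lemma IBP r m : forall j, (m < j)%nat -> (j <= r + 1)%nat ->
  RInt (fun s => Derive_n (Bf r) j s * s ^ m) 0 1 = 0.
Proof.
  induction m; intros j Hmj Hjr; (destruct j as [|j']; [lia|]);
    destruct (Bf_vanish r j') as [V0 V1]; try lia.
  - transitivity (RInt (Derive_n (Bf r) (S j')) 0 1). apply RInt_ext'; intros; simpl; ring.
    rewrite (FTC (Derive_n (Bf r) j') (Derive_n (Bf r) (S j'))). rewrite V0, V1; Rring.
    intros; apply Bf_dn. intros; apply Bf_dn_cont.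
  - assert (EX : forall k, ex_RInt (fun s => Derive_n (Bf r) k s * s ^ m) 0 1).
    { intros k. apply ex_RInt_c. intros. apply (UP_cont ((r+1+(r+1) - k) + m)).
      apply UP_mul. apply (UP_Dn k _ _ (Bf_UP r)). apply UP_pow. }
    assert (E : RInt (fun s => Derive_n (Bf r) (S j') s * s ^ (S m) +
                   INR (S m) * (Derive_n (Bf r) j' s * s ^ m)) 0 1 = 0).
    { rewrite (FTC (fun s => Derive_n (Bf r) j' s * s ^ (S m))). rewrite V0, V1; Rring.
      intros x. eapply isd_ext. intros; reflexivity. 2: apply isd_mult. 3: apply is_derive_pow, isd_id.
      2: apply Bf_dn. simpl. ring.
      intros x. apply (UP_cont ((r+1+(r+1) - S j') + S m + ((r+1+(r+1) - j') + m))). apply UPadd.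
      apply UP_le with (((r+1+(r+1) - S j') + S m))%nat. lia.
      apply UP_mul. apply (UP_Dn (S j') _ _ (Bf_UP r)). apply UP_pow.
      apply UP_le with (((r+1+(r+1) - j') + m))%nat. lia.
      apply UP_scal. apply UP_mul. apply (UP_Dn j' _ _ (Bf_UP r)). apply UP_pow. }
    rewrite RInt_plus', RInt_scal', IHm in E; try lia. lra.
    apply EX. apply ex_RInt_c. intros. apply (UP_cont ((r+1+(r+1) - S j') + S m)).
    apply UP_mul. apply (UP_Dn (S j') _ _ (Bf_UP r)). apply UP_pow.
    apply ex_RInt_c. intros. apply (UP_cont ((r+1+(r+1) - j') + m)).
    apply UP_scal. apply UP_mul. apply (UP_Dn j' _ _ (Bf_UP r)). apply UP_pow.
Qed.

Lemma lobatto_1d r (phi phi1 : R -> R) : UP (S (S r)) phi ->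
  (forall x, is_derive phi x (phi1 x)) ->
  (forall m, (m <= r)%nat -> RInt (fun s => phi1 s * s ^ m) 0 1 = 0) ->
  exists c, forall s, phi s = phi 0 + c * lobatto_poly r s.
Proof.
  intros Hp Dp Op.
  destruct (UP_top _ _ Hp) as [e He]. simpl in He.
  destruct (lob_top r) as [l [h [Hl [Hh EL]]]].
  replace (r+2)%nat with (S (S r)) in EL by lia. replace (r+1)%nat with (S r) in Hh by lia.
  set (c := e / l). exists c.
  set (L1 := Derive_n (Bf r) (S r)).
  assert (DL : forall x, is_derive (lobatto_poly r) x (L1 x)).
  { intros x. apply (Bf_dn r r x). }
  set (psi := fun s => phi s - phi 0 - c * lobatto_poly r s).
  set (psi1 := fun s => phi1 s - c * L1 s).
  assert (Hpsi : UP (S r) psi).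
  { eapply UP_ext. apply UPadd. apply UPadd. exact He. apply (UPc _ (- phi 0)). apply (UP_scal _ (-c)), Hh.
    intros x. unfold psi. rewrite EL. simpl. unfold c. field. auto. }
  assert (Dpsi : forall x, is_derive psi x (psi1 x)).
  { intros x. unfold psi, psi1. eapply isd_ext. intros; reflexivity. 2: apply isd_minus. 3: apply isd_scal, DL.
    2: apply isd_minus. 2: apply Dp. 2: apply isd_const. ring. }
  assert (Hpsi1 : UP r psi1).
  { destruct (UP_deriv _ _ Hpsi) as [g [Hg Dg]]. eapply UP_ext. apply Hg.
    intros x. rewrite <- (is_derive_unique _ _ _ (Dg x)). now apply is_derive_unique. }
  assert (Hphi1 : UP (S r) phi1).
  { destruct (UP_deriv _ _ Hp) as [g [Hg Dg]]. eapply UP_ext. apply Hg.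
    intros x. rewrite <- (is_derive_unique _ _ _ (Dg x)). now apply is_derive_unique. }
  assert (HL1 : UP (r+1+(r+1) - S r) L1) by apply (UP_Dn (S r) _ _ (Bf_UP r)).
  assert (O1 : forall m, (m <= r)%nat -> RInt (fun s => psi1 s * s ^ m) 0 1 = 0).
  { intros m Hm. unfold psi1.
    rewrite (RInt_ext' _ (fun s => phi1 s * s ^ m - c * (L1 s * s ^ m))) by (intros; ring).
    assert (X1 : ex_RInt (fun s => L1 s * s ^ m) 0 1).
    { eapply UP_exRInt. apply UP_mul. apply HL1. apply UP_pow. }
    assert (X2 : ex_RInt (fun s => phi1 s * s ^ m) 0 1).
    { eapply UP_exRInt. apply UP_mul. apply Hphi1. apply UP_pow. }
    assert (X3 : ex_RInt (fun s => c * (L1 s * s ^ m)) 0 1).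
    { eapply UP_exRInt. apply UP_scal. apply UP_mul. apply HL1. apply UP_pow. }
    rewrite (RInt_minus' _ _ _ _ X2 X3), (RInt_scal' _ _ _ _ X1), (Op m Hm).
    unfold L1. rewrite IBP by lia. Rring. }
  assert (O2 : forall k v, UP k v -> forall m, (m + k <= r)%nat ->
            RInt (fun s => psi1 s * (s ^ m * v s)) 0 1 = 0).
  { induction 1; intros m Hm.
    - rewrite (RInt_ext' _ (fun s => c0 * (psi1 s * s ^ m))) by (intros; ring).
      rewrite RInt_scal', O1. Rring. lia. eapply UP_exRInt. apply UP_mul. apply Hpsi1. apply UP_pow.
    - rewrite (RInt_ext' _ (fun s => psi1 s * (s ^ (S m) * f s))) by (intros; simpl; ring).
      apply IHUP. lia.
    - rewrite (RInt_ext' _ (fun s => psi1 s * (s ^ m * f s) + psi1 s * (s ^ m * g s))) by (intros; ring).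
      rewrite RInt_plus', IHUP1, IHUP2; try lia. Rring.
      eapply UP_exRInt. apply UP_mul. apply Hpsi1. apply UP_mul. apply UP_pow. exact H.
      eapply UP_exRInt. apply UP_mul. apply Hpsi1. apply UP_mul. apply UP_pow. exact H0. }
  assert (Z : forall x, psi1 x = 0).
  { apply (UIT r psi1 0 1 Hpsi1). lra. intros x Hx.
    assert (P := pos_int (fun s => psi1 s * (s ^ 0 * psi1 s)) 0 1).
    assert (psi1 x * (x ^ 0 * psi1 x) = 0).
    { apply P; try lra.
      intros; eapply UP_cont. apply UP_mul. apply Hpsi1. apply UP_mul. apply UP_pow. apply Hpsi1.
      intros; simpl; nra. apply (O2 r psi1 Hpsi1 0%nat). lia. }
    simpl in H. nra. }
  intros s.
  assert (E : RInt psi1 0 s = psi s - psi 0).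
  { apply FTC. auto. intros; eapply UP_cont; eauto. }
  rewrite (RInt_ext' _ (fun _ => 0)), RInt_zero in E by auto.
  unfold psi in E. rewrite lob_0 in E. lra.
Qed.

Inductive BP : nat -> (pt -> R) -> Prop :=
| BPc : forall k c, BP k (fun _ => c)
| BPx : forall k f, BP k f -> BP (S k) (fun p => fst p * f p)
| BPy : forall k f, BP k f -> BP (S k) (fun p => snd p * f p)
| BPadd : forall k f g, BP k f -> BP k g -> BP k (fun p => f p + g p).

Ltac peq := cbv beta; first [apply (f_equal2 pair); ring | f_equal; apply (f_equal2 pair); ring | reflexivity].

Lemma BP_ext k f g : BP k f -> (forall x, f x = g x) -> BP k g.
Proof. intros H E. replace g with f; auto. now apply functional_extensionality. Qed.

Lemma BP_S k f : BP k f -> BP (S k) f.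
Proof. induction 1. apply BPc. now apply BPx. now apply BPy. now apply BPadd. Qed.

Lemma BP_le k k' f : (k <= k')%nat -> BP k f -> BP k' f.
Proof. induction 1; auto. intros; apply BP_S; auto. Qed.

Lemma BP_scal k c f : BP k f -> BP k (fun s => c * f s).
Proof.
  induction 1.
  - apply BPc.
  - eapply BP_ext. apply BPx, IHBP. intros; simpl; ring.
  - eapply BP_ext. apply BPy, IHBP. intros; simpl; ring.
  - eapply BP_ext. apply BPadd; [apply IHBP1|apply IHBP2]. intros; simpl; ring.
Qed.

Lemma BP_sub k f g : BP k f -> BP k g -> BP k (fun s => f s - g s).
Proof. intros. eapply BP_ext. apply BPadd. apply H. apply (BP_scal _ (-1)), H0. intros; simpl; ring. Qed.

Lemma BP_mul m n f g : BP m f -> BP n g -> BP (m + n) (fun s => f s * g s).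
Proof.
  intros H; revert n g. induction H; intros n h Hg.
  - apply (BP_le n). lia. now apply BP_scal.
  - simpl. eapply BP_ext. apply BPx, IHBP, Hg. intros; simpl; ring.
  - simpl. eapply BP_ext. apply BPy, IHBP, Hg. intros; simpl; ring.
  - eapply BP_ext. apply BPadd; [apply IHBP1; exact Hg|apply IHBP2; exact Hg]. intros; simpl; ring.
Qed.

Lemma BP_aff a b c : BP 1 (fun p => a + b * fst p + c * snd p).
Proof.
  eapply BP_ext. apply BPadd. apply BPadd. apply (BPc 1 a). apply (BPx 0 (fun _ => b)), BPc.
  apply (BPy 0 (fun _ => c)), BPc. intros; simpl; ring.
Qed.

Lemma BP_comp k f a1 b1 c1 a2 b2 c2 : BP k f ->
  BP k (fun p => f (a1 + b1 * fst p + c1 * snd p, a2 + b2 * fst p + c2 * snd p)).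
Proof.
  induction 1.
  - apply BPc.
  - apply (BP_mul 1 k (fun p => a1 + b1 * fst p + c1 * snd p)). apply BP_aff. auto.
  - apply (BP_mul 1 k (fun p => a2 + b2 * fst p + c2 * snd p)). apply BP_aff. auto.
  - apply BPadd; auto.
Qed.

Lemma BP_line k f a1 d1 a2 d2 : BP k f -> UP k (fun s => f (a1 + s * d1, a2 + s * d2)).
Proof.
  induction 1.
  - apply UPc.
  - apply (UP_mul 1 k (fun s => a1 + s * d1)). eapply UP_ext. apply (UP_aff a1 d1). intros; simpl; ring. auto.
  - apply (UP_mul 1 k (fun s => a2 + s * d2)). eapply UP_ext. apply (UP_aff a2 d2). intros; simpl; ring. auto.
  - apply UPadd; auto.
Qed.

Lemma BP_line' k f a1 d1 a2 d2 (g : R -> R) : BP k f ->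
  (forall s, g s = f (a1 + s * d1, a2 + s * d2)) -> UP k g.
Proof. intros H E. eapply UP_ext. apply (BP_line _ _ a1 d1 a2 d2 H). intros; auto. Qed.

Lemma BP0 f : BP 0 f -> exists c, forall x, f x = c.
Proof.
  intros H. remember 0%nat as k. induction H.
  - eauto.
  - discriminate.
  - discriminate.
  - destruct (IHBP1 Heqk) as [c1 E1], (IHBP2 Heqk) as [c2 E2]. exists (c1 + c2); intros; rewrite E1, E2; auto.
Qed.

Definition BPd k g := match k with O => forall x, g x = 0 | S m => BP m g end.

Lemma BPd_BP k g : BPd k g -> BP k g.
Proof. destruct k; simpl; intros H. eapply BP_ext. apply (BPc 0 0). intros; rewrite H; auto. now apply BP_S. Qed.

Lemma BP_deriv k f : BP k f -> exists f1 f2, BPd k f1 /\ BPd k f2 /\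
  forall a1 d1 a2 d2 s, is_derive (fun s => f (a1 + s * d1, a2 + s * d2)) s
     (d1 * f1 (a1 + s * d1, a2 + s * d2) + d2 * f2 (a1 + s * d1, a2 + s * d2)).
Proof.
  induction 1.
  - exists (fun _ => 0), (fun _ => 0). split; [|split].
    destruct k; simpl; auto. apply BPc. destruct k; simpl; auto. apply BPc.
    intros. eapply isd_ext. intros; reflexivity. 2: apply isd_const. ring.
  - destruct IHBP as [f1 [f2 [H1 [H2 H3]]]].
    exists (fun p => f p + fst p * f1 p), (fun p => fst p * f2 p). split; [|split].
    + simpl. destruct k.
      * eapply BP_ext. apply H. intros; simpl in H1; rewrite H1; ring.
      * apply BPadd. exact H. now apply BPx.
    + simpl. destruct k.
      * eapply BP_ext. apply (BPc 0 0). intros; simpl in H2; rewrite H2; ring.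
      * now apply BPx.
    + intros. eapply isd_ext. intros; reflexivity. 2: apply isd_mult. 3: apply H3.
      2: { eapply isd_ext. intros; reflexivity. 2: apply isd_plus. 2: apply isd_const. 2: apply isd_mult.
           2: apply isd_id. 2: apply isd_const. reflexivity. }
      simpl. ring.
  - destruct IHBP as [f1 [f2 [H1 [H2 H3]]]].
    exists (fun p => snd p * f1 p), (fun p => f p + snd p * f2 p). split; [|split].
    + simpl. destruct k.
      * eapply BP_ext. apply (BPc 0 0). intros; simpl in H1; rewrite H1; ring.
      * now apply BPy.
    + simpl. destruct k.
      * eapply BP_ext. apply H. intros; simpl in H2; rewrite H2; ring.
      * apply BPadd. exact H. now apply BPy.
    + intros. eapply isd_ext. intros; reflexivity. 2: apply isd_mult. 3: apply H3.
      2: { eapply isd_ext. intros; reflexivity. 2: apply isd_plus. 2: apply isd_const. 2: apply isd_mult.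
           2: apply isd_id. 2: apply isd_const. reflexivity. }
      simpl. ring.
  - destruct IHBP1 as [f1 [f2 [H1 [H2 H3]]]], IHBP2 as [g1 [g2 [G1 [G2 G3]]]].
    exists (fun p => f1 p + g1 p), (fun p => f2 p + g2 p). split; [|split].
    + destruct k; simpl in *. intros; rewrite H1, G1; ring. now apply BPadd.
    + destruct k; simpl in *. intros; rewrite H2, G2; ring. now apply BPadd.
    + intros. eapply isd_ext. intros; reflexivity. 2: apply isd_plus. 2: apply H3. 2: apply G3. ring.
Qed.

Definition partials (f f1 f2 : pt -> R) := forall a1 d1 a2 d2 s : R,
  is_derive (fun s => f (a1 + s * d1, a2 + s * d2)) s
     (d1 * f1 (a1 + s * d1, a2 + s * d2) + d2 * f2 (a1 + s * d1, a2 + s * d2)).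

Lemma BP_partials k f : BP k f -> exists f1 f2, BPd k f1 /\ BPd k f2 /\ partials f f1 f2.
Proof. apply BP_deriv. Qed.

Lemma pgen f f1 f2 (g : R -> pt) a1 d1 a2 d2 : partials f f1 f2 ->
  (forall s, g s = (a1 + s * d1, a2 + s * d2)) ->
  forall s, is_derive (fun s => f (g s)) s (d1 * f1 (g s) + d2 * f2 (g s)).
Proof.
  intros H E s. eapply isd_ext. intros t; rewrite E; reflexivity. rewrite E; reflexivity. apply H.
Qed.

Lemma pd1 f f1 f2 x y : partials f f1 f2 -> is_derive (fun t => f (t, y)) x (f1 (x, y)).
Proof.
  intros H. eapply isd_ext. intros; reflexivity. 2: apply (pgen f f1 f2 (fun t => (t, y)) 0 1 y 0 H).
  simpl; ring. intros; peq.
Qed.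

Lemma pd2 f f1 f2 x y : partials f f1 f2 -> is_derive (fun t => f (x, t)) y (f2 (x, y)).
Proof.
  intros H. eapply isd_ext. intros; reflexivity. 2: apply (pgen f f1 f2 (fun t => (x, t)) x 0 0 1 H).
  simpl; ring. intros; peq.
Qed.

Lemma partials_plus f f1 f2 g g1 g2 : partials f f1 f2 -> partials g g1 g2 ->
  partials (fun p => f p + g p) (fun p => f1 p + g1 p) (fun p => f2 p + g2 p).
Proof. intros Hf Hg; red; intros. eapply isd_ext. intros; reflexivity. 2: apply isd_plus. 2: apply Hf. 2: apply Hg. simpl; ring. Qed.

Lemma partials_scal c f f1 f2 : partials f f1 f2 ->
  partials (fun p => c * f p) (fun p => c * f1 p) (fun p => c * f2 p).
Proof. intros Hf; red; intros. eapply isd_ext. intros; reflexivity. 2: apply isd_scal, Hf. simpl; ring. Qed.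

Lemma partials_mult f f1 f2 g g1 g2 : partials f f1 f2 -> partials g g1 g2 ->
  partials (fun p => f p * g p) (fun p => f1 p * g p + f p * g1 p) (fun p => f2 p * g p + f p * g2 p).
Proof. intros Hf Hg; red; intros. eapply isd_ext. intros; reflexivity. 2: apply isd_mult. 2: apply Hf. 2: apply Hg. simpl; ring. Qed.

Lemma partials_comp f f1 f2 a1 b1 c1 a2 b2 c2 : partials f f1 f2 ->
  partials (fun p => f (a1 + b1 * fst p + c1 * snd p, a2 + b2 * fst p + c2 * snd p))
    (fun p => b1 * f1 (a1 + b1 * fst p + c1 * snd p, a2 + b2 * fst p + c2 * snd p)
            + b2 * f2 (a1 + b1 * fst p + c1 * snd p, a2 + b2 * fst p + c2 * snd p))
    (fun p => c1 * f1 (a1 + b1 * fst p + c1 * snd p, a2 + b2 * fst p + c2 * snd p)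
            + c2 * f2 (a1 + b1 * fst p + c1 * snd p, a2 + b2 * fst p + c2 * snd p)).
Proof.
  intros Hf; red; intros.
  eapply isd_ext. intros; reflexivity. 2: eapply (pgen f f1 f2 (fun s => (a1 + b1 * (a0 + s * d1) + c1 * (a3 + s * d2),
      a2 + b2 * (a0 + s * d1) + c2 * (a3 + s * d2))) (a1 + b1 * a0 + c1 * a3) (b1 * d1 + c1 * d2)
      (a2 + b2 * a0 + c2 * a3) (b2 * d1 + c2 * d2) Hf).
  simpl. set (P := (_, _)). ring. intros; peq.
Qed.

Lemma BP_cont_line k f (g : R -> pt) a1 d1 a2 d2 : BP k f ->
  (forall s, g s = (a1 + s * d1, a2 + s * d2)) -> forall s, continuous (fun s => f (g s)) s.
Proof. intros H E s. apply (UP_cont k). apply (BP_line' k f a1 d1 a2 d2); auto. intros; rewrite E; auto. Qed.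

Lemma BP_UP1 k f y : BP k f -> UP k (fun t => f (t, y)).
Proof. intros H. apply (BP_line' k f 0 1 y 0); auto. intros; peq. Qed.
Lemma BP_UP2 k f x : BP k f -> UP k (fun t => f (x, t)).
Proof. intros H. apply (BP_line' k f x 0 0 1); auto. intros; peq. Qed.

Lemma BP_swap k f : BP k f -> BP k (fun p => f (snd p, fst p)).
Proof. intros H. eapply BP_ext. apply (BP_comp k f 0 0 1 0 1 0 H). intros; peq. Qed.

Lemma mono_int j u : RInt (fun t => t ^ j) 0 u = u ^ (S j) / INR (S j).
Proof.
  assert (HN : INR (S j) <> 0) by (apply not_0_INR; lia).
  rewrite (FTC (fun t => t ^ (S j) / INR (S j))).
  - toR. replace (0 ^ S j) with 0 by (simpl; ring). field. auto.
  - intros x.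
    apply (isd_ext (fun t => / INR (S j) * t ^ S j) _ x (/ INR (S j) * (INR (S j) * 1 * x ^ pred (S j)))).
    + intros; unfold Rdiv; ring.
    + simpl pred; field; auto.
    + apply isd_scal. apply (is_derive_pow (fun t => t) (S j) x 1), isd_id.
  - intros; eapply UP_cont, UP_pow.
Qed.

Lemma int_Kpow K j u : RInt (fun t => K * t ^ j) 0 u = K * (u ^ (S j) / INR (S j)).
Proof. rewrite RInt_scal', mono_int. auto. eapply UP_exRInt, UP_pow. Qed.

Lemma UP_wt k G s i j : BP k G -> UP (j + k) (fun t => s ^ i * t ^ j * G (s, t)).
Proof.
  intros H. eapply UP_ext. apply (UP_scal _ (s ^ i)). apply UP_mul. apply UP_pow. apply (BP_UP2 k G s H).
  intros; simpl; ring.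
Qed.

Lemma UP_wt' k G t i j : BP k G -> UP (i + k) (fun s => s ^ i * t ^ j * G (s, t)).
Proof.
  intros H. eapply UP_ext. apply (UP_scal _ (t ^ j)). apply UP_mul. apply UP_pow. apply (BP_UP1 k G t H).
  intros; simpl; ring.
Qed.

Lemma inner_UP k G : BP k G -> forall i j, exists n,
  UP n (fun s => RInt (fun t => s ^ i * t ^ j * G (s, t)) 0 (1 - s)).
Proof.
  induction 1; intros i j.
  - exists (i + S j)%nat. eapply UP_ext.
    apply (UP_mul i (S j) (fun s => c / INR (S j) * s ^ i) (fun s => (1 + -1 * s) ^ (S j))).
    apply UP_scal, UP_pow. apply (UP_comp _ (fun s => s ^ S j)), UP_pow.
    intros s. cbv beta. rewrite (RInt_ext' _ (fun t => (s ^ i * c) * t ^ j)) by (intros; ring).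
    rewrite int_Kpow. replace (1 + -1 * s) with (1 - s) by ring. unfold Rdiv; ring.
  - destruct (IHBP (S i) j) as [n Hn]. exists n. eapply UP_ext. apply Hn.
    intros s. apply RInt_ext'. intros; simpl; ring.
  - destruct (IHBP i (S j)) as [n Hn]. exists n. eapply UP_ext. apply Hn.
    intros s. apply RInt_ext'. intros; simpl; ring.
  - destruct (IHBP1 i j) as [n1 H1], (IHBP2 i j) as [n2 H2]. exists (n1 + n2)%nat. eapply UP_ext.
    apply UPadd. apply (UP_le n1). lia. apply H1. apply (UP_le n2). lia. apply H2.
    intros s. cbv beta. rewrite <- RInt_plus'. apply RInt_ext'. intros; simpl; ring.
    eapply UP_exRInt, (UP_wt k f s i j H). eapply UP_exRInt, (UP_wt k g s i j H0).
Qed.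

Lemma inner_UP' k G : BP k G -> forall i j, exists n,
  UP n (fun t => RInt (fun s => s ^ i * t ^ j * G (s, t)) 0 (1 - t)).
Proof.
  intros H i j. destruct (inner_UP k _ (BP_swap k G H) j i) as [n Hn]. exists n.
  eapply UP_ext. apply Hn. intros t. apply RInt_ext'. intros; simpl; ring.
Qed.

Lemma RInt_flip k f : UP k f -> RInt (fun s => f (1 - s)) 0 1 = RInt f 0 1.
Proof.
  intros H.
  assert (E := RInt_comp_lin f (-1) 1 0 1 (UP_exRInt _ _ _ _ H)).
  replace (-1 * 0 + 1) with 1 in E by ring. replace (-1 * 1 + 1) with 0 in E by ring.
  rewrite <- (opp_RInt_swap f 0 1 (UP_exRInt _ _ _ _ H)) in E.
  rewrite (RInt_ext' _ (fun y => -1 * f (1 - y))) in E.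
  rewrite RInt_scal' in E. change (-1 * RInt (fun y => f (1 - y)) 0 1 = - RInt f 0 1) in E. lra.
  eapply UP_exRInt. eapply UP_ext. apply (UP_comp k f 1 (-1) H). intros; cbv beta; f_equal; ring.
  intros; change (scal (-1) (f (-1 * x + 1)) = -1 * f (1 - x)). replace (-1 * x + 1) with (1 - x) by ring. reflexivity.
Qed.

Definition beta i j := RInt (fun s => s ^ i * (1 - s) ^ j) 0 1.

Lemma UP_bt i j : UP (i + j) (fun s => s ^ i * (1 - s) ^ j).
Proof. apply UP_mul. apply UP_pow. eapply UP_ext. apply (UP_comp _ (fun s => s ^ j) 1 (-1)), UP_pow. intros; simpl; f_equal; ring. Qed.

Lemma beta_sym i j : beta i j = beta j i.
Proof.
  unfold beta. rewrite <- (RInt_flip _ _ (UP_bt i j)). apply RInt_ext'. intros; simpl.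
  replace (1 - (1 - x)) with x by ring. ring.
Qed.

Lemma beta_rec i j : INR (S i) * beta i (S j) = INR (S j) * beta (S i) j.
Proof.
  unfold beta.
  assert (E : RInt (fun s => INR (S i) * (s ^ i * (1 - s) ^ S j) - INR (S j) * (s ^ S i * (1 - s) ^ j)) 0 1 = 0).
  { rewrite (FTC (fun s => s ^ S i * (1 - s) ^ S j)). toR. simpl; ring.
    intros x. eapply isd_ext. intros; reflexivity. 2: apply isd_mult.
    2: apply (is_derive_pow (fun t => t) (S i) x 1), isd_id.
    2: apply (is_derive_pow (fun t => 1 - t) (S j) x (0 - 1)), isd_minus. 2: apply isd_const. 2: apply isd_id.
    simpl pred. cbv beta. ring.
    intros x. eapply UP_cont. apply UP_sub with (k := (i + S j)%nat). apply UP_scal, UP_bt. replace (i + S j)%nat with (S i + j)%nat by lia. apply UP_scal, UP_bt. }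
  rewrite RInt_minus', RInt_scal', RInt_scal' in E; try (eapply UP_exRInt; first [apply UP_bt | apply UP_scal, UP_bt]).
  toR; lra.
Qed.


Lemma fubini k G : BP k G -> forall i j,
  RInt (fun s => RInt (fun t => s ^ i * t ^ j * G (s, t)) 0 (1 - s)) 0 1 =
  RInt (fun t => RInt (fun s => s ^ i * t ^ j * G (s, t)) 0 (1 - t)) 0 1.
Proof.
  induction 1; intros i j.
  - rewrite (RInt_ext' _ (fun s => c / INR (S j) * (s ^ i * (1 - s) ^ (S j)))).
    2: { intros s. rewrite (RInt_ext' _ (fun t => (s ^ i * c) * t ^ j)) by (intros; ring).
         rewrite int_Kpow. unfold Rdiv; ring. }
    symmetry.
    rewrite (RInt_ext' _ (fun t => c / INR (S i) * (t ^ j * (1 - t) ^ (S i)))).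
    2: { intros t. rewrite (RInt_ext' _ (fun s => (t ^ j * c) * s ^ i)) by (intros; ring).
         rewrite int_Kpow. unfold Rdiv; ring. }
    rewrite RInt_scal'. 2: eapply UP_exRInt; apply UP_bt.
    rewrite RInt_scal'. 2: eapply UP_exRInt; apply UP_bt.
    change (c / INR (S i) * beta j (S i) = c / INR (S j) * beta i (S j)).
    rewrite (beta_sym j (S i)).
    assert (R1 := beta_rec i j).
    assert (INR (S i) <> 0) by (apply not_0_INR; lia). assert (INR (S j) <> 0) by (apply not_0_INR; lia).
    generalize dependent (INR (S i)); generalize dependent (INR (S j)); intros b Hb a R1 Ha.
    assert (E : beta (S i) j = a * beta i (S j) / b).
    { apply (Rmult_eq_reg_l b); auto. rewrite <- R1. field. auto. }
    rewrite E. field. auto.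
  - rewrite (RInt_ext' _ (fun s => RInt (fun t => s ^ (S i) * t ^ j * f (s, t)) 0 (1 - s))).
    2: intros s; apply RInt_ext'; intros; simpl; ring.
    symmetry. rewrite (RInt_ext' _ (fun t => RInt (fun s => s ^ (S i) * t ^ j * f (s, t)) 0 (1 - t))).
    2: intros t; apply RInt_ext'; intros; simpl; ring.
    symmetry. apply IHBP.
  - rewrite (RInt_ext' _ (fun s => RInt (fun t => s ^ i * t ^ (S j) * f (s, t)) 0 (1 - s))).
    2: intros s; apply RInt_ext'; intros; simpl; ring.
    symmetry. rewrite (RInt_ext' _ (fun t => RInt (fun s => s ^ i * t ^ (S j) * f (s, t)) 0 (1 - t))).
    2: intros t; apply RInt_ext'; intros; simpl; ring.
    symmetry. apply IHBP.
  - destruct (inner_UP _ _ H i j) as [n1 N1], (inner_UP _ _ H0 i j) as [n2 N2].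
    destruct (inner_UP' _ _ H i j) as [n3 N3], (inner_UP' _ _ H0 i j) as [n4 N4].
    rewrite (RInt_ext' _ (fun s => RInt (fun t => s ^ i * t ^ j * f (s, t)) 0 (1 - s)
                                 + RInt (fun t => s ^ i * t ^ j * g (s, t)) 0 (1 - s))).
    2: { intros s; rewrite <- RInt_plus'. apply RInt_ext'; intros; simpl; ring.
         eapply UP_exRInt, (UP_wt k f s i j H). eapply UP_exRInt, (UP_wt k g s i j H0). }
    symmetry.
    rewrite (RInt_ext' _ (fun t => RInt (fun s => s ^ i * t ^ j * f (s, t)) 0 (1 - t)
                                 + RInt (fun s => s ^ i * t ^ j * g (s, t)) 0 (1 - t))).
    2: { intros t; rewrite <- RInt_plus'. apply RInt_ext'; intros; simpl; ring.
         eapply UP_exRInt, (UP_wt' k f t i j H). eapply UP_exRInt, (UP_wt' k g t i j H0). }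
    rewrite RInt_plus'. 2: eapply UP_exRInt; apply N3. 2: eapply UP_exRInt; apply N4.
    rewrite RInt_plus'. 2: eapply UP_exRInt; apply N1. 2: eapply UP_exRInt; apply N2.
    rewrite IHBP1, IHBP2. reflexivity.
Qed.

Lemma exR_line k f (g : R -> R) a1 d1 a2 d2 a b : BP k f ->
  (forall s, g s = f (a1 + s * d1, a2 + s * d2)) -> ex_RInt g a b.
Proof. intros H E. eapply UP_exRInt. eapply BP_line'; eauto. Qed.

Lemma green_ref kG1 kG2 kg1 kg2 (G1 G2 g1 g2 : pt -> R) :
  BP kG1 G1 -> BP kG2 G2 -> BP kg1 g1 -> BP kg2 g2 ->
  (forall s t, is_derive (fun u => G1 (u, t)) s (g1 (s, t))) ->
  (forall s t, is_derive (fun u => G2 (s, u)) t (g2 (s, t))) ->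
  RInt (fun s => RInt (fun t => g1 (s, t) + g2 (s, t)) 0 (1 - s)) 0 1 =
  RInt (fun s => G1 (s, 1 - s) + G2 (s, 1 - s) - G2 (s, 0)) 0 1 - RInt (fun t => G1 (0, t)) 0 1.
Proof.
  intros HG1 HG2 Hg1 Hg2 D1 D2.
  rewrite (RInt_ext' _ (fun s => RInt (fun t => g1 (s, t)) 0 (1 - s) + RInt (fun t => g2 (s, t)) 0 (1 - s))).
  2: { intros s. apply RInt_plus'. apply (exR_line kg1 g1 _ s 0 0 1); auto. intros; peq.
       apply (exR_line kg2 g2 _ s 0 0 1); auto. intros; peq. }
  destruct (inner_UP _ _ Hg1 0 0) as [n1 N1], (inner_UP _ _ Hg2 0 0) as [n2 N2].
  assert (X1 : ex_RInt (fun s => RInt (fun t => g1 (s, t)) 0 (1 - s)) 0 1).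
  { eapply UP_exRInt. eapply UP_ext. apply N1. intros; apply RInt_ext'; intros; simpl; ring. }
  assert (X2 : ex_RInt (fun s => RInt (fun t => g2 (s, t)) 0 (1 - s)) 0 1).
  { eapply UP_exRInt. eapply UP_ext. apply N2. intros; apply RInt_ext'; intros; simpl; ring. }
  rewrite (RInt_plus' _ _ _ _ X1 X2).
  assert (F1 : RInt (fun s => RInt (fun t => g1 (s, t)) 0 (1 - s)) 0 1 =
               RInt (fun t => G1 (1 - t, t) - G1 (0, t)) 0 1).
  { transitivity (RInt (fun s => RInt (fun t => s ^ 0 * t ^ 0 * g1 (s, t)) 0 (1 - s)) 0 1).
    apply RInt_ext'; intros; apply RInt_ext'; intros; simpl; ring.
    rewrite (fubini _ _ Hg1 0 0). apply RInt_ext'. intros t.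
    rewrite (RInt_ext' _ (fun s => g1 (s, t))) by (intros; simpl; ring).
    apply (FTC (fun u => G1 (u, t))). intros; apply D1.
    intros; apply (UP_cont kg1). apply BP_UP1; auto. }
  assert (F2 : RInt (fun s => RInt (fun t => g2 (s, t)) 0 (1 - s)) 0 1 =
               RInt (fun s => G2 (s, 1 - s) - G2 (s, 0)) 0 1).
  { apply RInt_ext'. intros s. apply (FTC (fun u => G2 (s, u))). intros; apply D2.
    intros; apply (UP_cont kg2). apply BP_UP2; auto. }
  assert (F3 : RInt (fun t => G1 (1 - t, t)) 0 1 = RInt (fun s => G1 (s, 1 - s)) 0 1).
  { rewrite <- (RInt_flip kG1 (fun s => G1 (s, 1 - s))). apply RInt_ext'. intros; f_equal; peq.
    apply (BP_line' kG1 G1 0 1 1 (-1)); auto. intros; peq. }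
  rewrite F1, F2.
  rewrite RInt_minus', F3.
  rewrite (RInt_ext' (fun s => G1 (s, 1 - s) + G2 (s, 1 - s) - G2 (s, 0))
            (fun s => G1 (s, 1 - s) + (G2 (s, 1 - s) - G2 (s, 0)))) by (intros; ring).
  rewrite RInt_plus'. toR. ring.
  apply (exR_line kG1 G1 _ 0 1 1 (-1)); auto. intros; peq.
  apply UP_exRInt with kG2. apply UP_sub. apply (BP_line' kG2 G2 0 1 1 (-1)); auto. intros; peq.
  apply (BP_line' kG2 G2 0 1 0 0); auto. intros; peq.
  apply (exR_line kG1 G1 _ 1 (-1) 0 1); auto. intros; peq.
  apply (exR_line kG1 G1 _ 0 0 0 1); auto. intros; peq.
Qed.

Lemma sum_zero (F : nat -> R) n : (forall i, (i <= n)%nat -> F i = 0) -> sum_f_R0 F n = 0.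
Proof. induction n; intros H; simpl. apply H; lia. rewrite IHn, H. ring. lia. intros; apply H; lia. Qed.

Lemma sum_first (F : nat -> R) n : (forall i, (0 < i)%nat -> F i = 0) -> sum_f_R0 F n = F 0%nat.
Proof. induction n; intros H; simpl. auto. rewrite IHn, (H (S n)). ring. lia. auto. Qed.

Lemma sum_S (F : nat -> R) n : sum_f_R0 F (S n) = F 0%nat + sum_f_R0 (fun i => F (S i)) n.
Proof. rewrite decomp_sum. reflexivity. lia. Qed.

Definition P2sum k (c : nat -> nat -> R) (x : pt) :=
  sum_f_R0 (fun i => sum_f_R0 (fun j => c i j * fst x ^ i * snd x ^ j) (k - i)) k.

Lemma poly2_const k v : is_poly2 k (fun _ => v).
Proof.
  exists (fun i j => if Nat.eqb i 0 then if Nat.eqb j 0 then v else 0 else 0).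
  intros x. rewrite sum_first. rewrite sum_first. simpl. ring.
  intros [|j] Hj; simpl. lia. ring.
  intros [|i] Hi; simpl. lia. apply sum_zero. intros; ring.
Qed.

Lemma poly2_add k f g : is_poly2 k f -> is_poly2 k g -> is_poly2 k (fun x => f x + g x).
Proof.
  intros [c Hc] [c' Hc']. exists (fun i j => c i j + c' i j). intros x.
  rewrite Hc, Hc', <- sum_plus. apply sum_eq. intros i _. rewrite <- sum_plus. apply sum_eq. intros; ring.
Qed.

Lemma poly2_x k f : is_poly2 k f -> is_poly2 (S k) (fun x => fst x * f x).
Proof.
  intros [c Hc]. exists (fun i j => match i with O => 0 | S i' => c i' j end). intros x.
  rewrite Hc, sum_S. rewrite (sum_zero (fun j => 0 * fst x ^ 0 * snd x ^ j)) by (intros; ring). rewrite Rplus_0_l.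
  rewrite scal_sum. apply sum_eq. intros i _. simpl (S k - S i)%nat.
  rewrite Rmult_comm, scal_sum. apply sum_eq. intros j _. simpl. ring.
Qed.

Lemma poly2_y k f : is_poly2 k f -> is_poly2 (S k) (fun x => snd x * f x).
Proof.
  intros [c Hc]. exists (fun i j => match j with O => 0 | S j' => c i j' end). intros x.
  set (c' := fun i j => match j with O => 0 | S j' => c i j' end).
  rewrite Hc.
  transitivity (sum_f_R0 (fun i => sum_f_R0 (fun j => c' i j * fst x ^ i * snd x ^ j) (S k - i)) k
     + sum_f_R0 (fun j => c' (S k) j * fst x ^ (S k) * snd x ^ j) (S k - S k)).
  2: reflexivity.
  rewrite Nat.sub_diag. simpl (sum_f_R0 _ 0). rewrite Rmult_0_l, Rmult_0_l, Rplus_0_r.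
  rewrite scal_sum. apply sum_eq. intros i Hi.
  replace (S k - i)%nat with (S (k - i)) by lia. rewrite sum_S. unfold c' at 1. rewrite Rmult_0_l, Rmult_0_l, Rplus_0_l.
  rewrite Rmult_comm, scal_sum. apply sum_eq. intros j _. unfold c'. simpl. ring.
Qed.

Lemma BP_poly2 k f : BP k f -> is_poly2 k f.
Proof.
  induction 1.
  - apply poly2_const.
  - now apply poly2_x.
  - now apply poly2_y.
  - now apply poly2_add.
Qed.

Lemma BP_sum k (F : nat -> pt -> R) n : (forall i, (i <= n)%nat -> BP k (F i)) ->
  BP k (fun p => sum_f_R0 (fun i => F i p) n).
Proof.
  induction n; intros H; simpl. apply H; lia.
  apply BPadd. apply IHn; intros; apply H; lia. apply H; lia.
Qed.

Lemma BP_powx i : BP i (fun p => fst p ^ i).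
Proof. induction i. exact (BPc 0 1). simpl. now apply BPx. Qed.
Lemma BP_powy i : BP i (fun p => snd p ^ i).
Proof. induction i. exact (BPc 0 1). simpl. now apply BPy. Qed.



Lemma BP_mono k c i j : (i + j <= k)%nat -> BP k (fun p => c * fst p ^ i * snd p ^ j).
Proof.
  intros H. apply (BP_le (i + j)); auto. eapply BP_ext.
  apply (BP_scal _ c), (BP_mul i j _ _ (BP_powx i) (BP_powy j)).
  intros; simpl; ring.
Qed.

Lemma poly2_BP k f : is_poly2 k f -> BP k f.
Proof.
  intros [c Hc]. eapply BP_ext. 2: intros; symmetry; apply Hc.
  apply BP_sum. intros i Hi. apply BP_sum. intros j Hj. apply BP_mono. lia.
Qed.

Lemma edge_neq T a b : nondegenerate T -> is_edge T a b -> a <> b.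
Proof.
  unfold nondegenerate, tdet, is_edge, psub. destruct T as [[[x1 y1] [x2 y2]] [x3 y3]].
  unfold tv1, tv2, tv3; simpl. intros ND [[-> ->]|[[-> ->]|[-> ->]]] E; inversion E; subst; apply ND; ring.
Qed.

Lemma edge_simp (a b : pt) (q : pt -> pt) (v : pt -> R) k :
  a <> b -> BP k (fun x => fst (q x)) -> BP k (fun x => snd (q x)) -> BP k v ->
  edge_int a b (fun x => pdot (psub (q x) (0,0)) (edge_normal a b) * v x) = 0 ->
  RInt (fun s => (fst (q (fst a + s * (fst b - fst a), snd a + s * (snd b - snd a))) * (snd b - snd a)
              - snd (q (fst a + s * (fst b - fst a), snd a + s * (snd b - snd a))) * (fst b - fst a))
              * v (fst a + s * (fst b - fst a), snd a + s * (snd b - snd a))) 0 1 = 0.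
Proof.
  intros Hab H1 H2 Hv E.
  unfold edge_int, edge_normal, pnorm, pdot, psub, pscal, padd in E. simpl in E.
  set (D := (fst b - fst a) * (fst b - fst a) + (snd b - snd a) * (snd b - snd a)) in E.
  assert (HD : 0 < D).
  { unfold D. destruct a as [a1 a2], b as [b1 b2]; simpl.
    destruct (Req_dec a1 b1) as [e1|e1]; destruct (Req_dec a2 b2) as [e2|e2].
    - subst; congruence.
    - assert (0 < (b2 - a2) * (b2 - a2)) by (apply Rsqr_pos_lt; intro; apply e2; lra). nra.
    - assert (0 < (b1 - a1) * (b1 - a1)) by (apply Rsqr_pos_lt; intro; apply e1; lra). nra.
    - assert (0 < (b1 - a1) * (b1 - a1)) by (apply Rsqr_pos_lt; intro; apply e1; lra). nra. }
  assert (HS : 0 < sqrt D) by (apply sqrt_lt_R0; auto).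
  set (g := fun x => (fst (q x) * (snd b - snd a) - snd (q x) * (fst b - fst a)) * v x).
  assert (Hg : BP (k + k) g).
  { apply BP_mul. apply BP_sub. apply (BP_le k). lia. eapply BP_ext. apply (BP_scal _ (snd b - snd a)), H1.
    intros; simpl; ring. apply (BP_le k). lia. eapply BP_ext. apply (BP_scal _ (fst b - fst a)), H2.
    intros; simpl; ring. exact Hv. }
  rewrite (RInt_ext' _ (fun s => / sqrt D * g (fst a + s * (fst b - fst a), snd a + s * (snd b - snd a)))) in E.
  2: intros; unfold g; ring.
  rewrite RInt_scal' in E. 2: apply (exR_line (k + k) g _ (fst a) (fst b - fst a) (snd a) (snd b - snd a)); auto.
  rewrite <- Rmult_assoc, Rinv_r, Rmult_1_l in E by lra. exact E.
Qed.

Definition DI (G : pt -> R) := RInt (fun s => RInt (fun t => G (s, t)) 0 (1 - s)) 0 1.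

Lemma exR_in k G s a b : BP k G -> ex_RInt (fun t => G (s, t)) a b.
Proof. intros H. eapply UP_exRInt, (BP_UP2 k G s H). Qed.

Lemma exR_out k G : BP k G -> ex_RInt (fun s => RInt (fun t => G (s, t)) 0 (1 - s)) 0 1.
Proof.
  intros H. destruct (inner_UP k G H 0 0) as [n Hn]. eapply UP_exRInt. eapply UP_ext. apply Hn.
  intros; apply RInt_ext'; intros; simpl; ring.
Qed.

Lemma DI_ext G H : (forall s t, G (s, t) = H (s, t)) -> DI G = DI H.
Proof. intros E. unfold DI. apply RInt_ext'; intros; apply RInt_ext'; intros; auto. Qed.

Lemma DI_plus k G H : BP k G -> BP k H -> DI (fun p => G p + H p) = DI G + DI H.
Proof.
  intros HG HH. unfold DI.
  rewrite (RInt_ext' _ (fun s => RInt (fun t => G (s, t)) 0 (1 - s) + RInt (fun t => H (s, t)) 0 (1 - s))).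
  apply RInt_plus'. eapply exR_out; eauto. eapply exR_out; eauto.
  intros s. apply RInt_plus'; eapply exR_in; eauto.
Qed.

Lemma DI_scal k c G : BP k G -> DI (fun p => c * G p) = c * DI G.
Proof.
  intros HG. unfold DI.
  rewrite (RInt_ext' _ (fun s => c * RInt (fun t => G (s, t)) 0 (1 - s))).
  apply RInt_scal'. eapply exR_out; eauto.
  intros s. apply RInt_scal'; eapply exR_in; eauto.
Qed.

Lemma DI_zero G : (forall p, G p = 0) -> DI G = 0.
Proof.
  intros E. unfold DI. rewrite (RInt_ext' _ (fun _ => 0)). apply RInt_zero.
  intros s. rewrite (RInt_ext' _ (fun _ => 0)). apply RInt_zero. intros; auto.
Qed.

Lemma pos2 k D : BP k D -> DI (fun p => D p * D p) = 0 ->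
  forall s t, 0 < s < 1/2 -> 0 < t < 1/2 -> D (s, t) = 0.
Proof.
  intros HD E s t Hs Ht.
  assert (HDD : BP (k + k) (fun p => D p * D p)) by (apply BP_mul; auto).
  destruct (inner_UP _ _ HDD 0 0) as [n Hn].
  assert (HU : UP n (fun s => RInt (fun t => D (s, t) * D (s, t)) 0 (1 - s))).
  { eapply UP_ext. apply Hn. intros; apply RInt_ext'; intros; simpl; ring. }
  assert (Z : forall s, 0 <= s <= 1 -> RInt (fun t => D (s, t) * D (s, t)) 0 (1 - s) = 0).
  { apply (pos_int (fun s => RInt (fun t => D (s, t) * D (s, t)) 0 (1 - s)) 0 1). lra.
    intros; eapply UP_cont; eauto.
    intros x Hx. apply RInt_ge_0. lra. apply (exR_in (k + k) (fun p => D p * D p)); auto.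
    intros; nra.
    exact E. }
  assert (Z2 := pos_int (fun t => D (s, t) * D (s, t)) 0 (1 - s)).
  assert (D (s, t) * D (s, t) = 0).
  { apply Z2. lra. intros; eapply UP_cont. apply (BP_UP2 (k + k) (fun p => D p * D p)); auto.
    intros; nra. apply Z; lra. lra. }
  nra.
Qed.

Lemma UIT2 k D : BP k D -> (forall s t, 0 < s < 1/2 -> 0 < t < 1/2 -> D (s, t) = 0) -> forall p, D p = 0.
Proof.
  intros HD Z [s t].
  assert (Z1 : forall t0, 0 < t0 < 1/2 -> forall s, D (s, t0) = 0).
  { intros t0 Ht0. apply (UIT k (fun s => D (s, t0)) 0 (1/2)). apply BP_UP1; auto. lra.
    intros; apply Z; auto. }
  apply (UIT k (fun t => D (s, t)) 0 (1/2)). apply BP_UP2; auto. lra.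
  intros; apply Z1; auto.
Qed.

Lemma edge_UP (a b : pt) (q : pt -> pt) (v : pt -> R) k :
  BP k (fun x => fst (q x)) -> BP k (fun x => snd (q x)) -> BP k v ->
  UP (k + k) (fun s => (fst (q (fst a + s * (fst b - fst a), snd a + s * (snd b - snd a))) * (snd b - snd a)
              - snd (q (fst a + s * (fst b - fst a), snd a + s * (snd b - snd a))) * (fst b - fst a))
              * v (fst a + s * (fst b - fst a), snd a + s * (snd b - snd a))).
Proof.
  intros H1 H2 Hv.
  set (g := fun x => (fst (q x) * (snd b - snd a) - snd (q x) * (fst b - fst a)) * v x).
  assert (Hg : BP (k + k) g).
  { apply BP_mul. apply BP_sub. apply (BP_le k). lia. eapply BP_ext. apply (BP_scal _ (snd b - snd a)), H1.
    intros; simpl; ring. apply (BP_le k). lia. eapply BP_ext. apply (BP_scal _ (fst b - fst a)), H2.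
    intros; simpl; ring. exact Hv. }
  apply (BP_line' (k + k) g (fst a) (fst b - fst a) (snd a) (snd b - snd a) _ Hg). intros; reflexivity.
Qed.

Lemma X_inv (x1 y1 x2 y2 x3 y3 : R) : (x2 - x1) * (y3 - y1) - (y2 - y1) * (x3 - x1) <> 0 ->
  forall p : pt, exists s t, p = (x1 + (x2 - x1) * s + (x3 - x1) * t, y1 + (y2 - y1) * s + (y3 - y1) * t).
Proof.
  intros Hd [u v].
  exists (((u - x1) * (y3 - y1) - (v - y1) * (x3 - x1)) / ((x2 - x1) * (y3 - y1) - (y2 - y1) * (x3 - x1))).
  exists (((x2 - x1) * (v - y1) - (y2 - y1) * (u - x1)) / ((x2 - x1) * (y3 - y1) - (y2 - y1) * (x3 - x1))).
  apply (f_equal2 pair); field; auto.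
Qed.

Lemma exR_line2 k f (g : R -> pt) a1 d1 a2 d2 a b : BP k f ->
  (forall s, g s = (a1 + s * d1, a2 + s * d2)) -> ex_RInt (fun s => f (g s)) a b.
Proof. intros H E. apply (exR_line k f _ a1 d1 a2 d2); auto. intros; rewrite E; auto. Qed.

Lemma div_free r (T : tri2) (q : pt -> pt) q11 q12 q21 q22 :
  nondegenerate T ->
  BP (S r) (fun x => fst (q x)) -> BP (S r) (fun x => snd (q x)) ->
  BP r q11 -> BP r q12 -> BP r q21 -> BP r q22 ->
  partials (fun x => fst (q x)) q11 q12 -> partials (fun x => snd (q x)) q21 q22 ->
  is_RT_interp r T q (fun _ => (0,0)) ->
  forall p, q11 p + q22 p = 0.
Proof.
  intros ND Hq1 Hq2 H11 H12 H21 H22 Pq1 Pq2 [_ [HE HI]].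
  set (d := fun p => q11 p + q22 p).
  assert (Hd : BP r d) by (apply BPadd; auto).
  destruct (BP_partials r d Hd) as [dx [dy [Hdx [Hdy Pd]]]].
  assert (Bdx : BP r dx) by (apply BPd_BP; auto). assert (Bdy : BP r dy) by (apply BPd_BP; auto).
  assert (Ed : forall p, d p = q11 p + q22 p) by reflexivity. clearbody d.
  set (N := (r + S r)%nat).
  destruct T as [[[x1 y1] [x2 y2]] [x3 y3]].
  assert (Hdet : (x2 - x1) * (y3 - y1) - (y2 - y1) * (x3 - x1) <> 0).
  { intro E; apply ND. unfold tdet, psub, tv1, tv2, tv3; simpl. rewrite <- E; ring. }
  set (det := (x2 - x1) * (y3 - y1) - (y2 - y1) * (x3 - x1)) in Hdet.
  set (X := fun p : pt => (x1 + (x2 - x1) * fst p + (x3 - x1) * snd p, y1 + (y2 - y1) * fst p + (y3 - y1) * snd p)).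
  set (P1 := fun p => d p * fst (q p)). set (P2 := fun p => d p * snd (q p)).
  set (P11 := fun p => dx p * fst (q p) + d p * q11 p). set (P12 := fun p => dy p * fst (q p) + d p * q12 p).
  set (P21 := fun p => dx p * snd (q p) + d p * q21 p). set (P22 := fun p => dy p * snd (q p) + d p * q22 p).
  assert (PP1 : partials P1 P11 P12) by (apply partials_mult; auto).
  assert (PP2 : partials P2 P21 P22) by (apply partials_mult; auto).
  assert (BN : forall f, BP r f -> BP N f) by (intros; apply (BP_le r); auto; unfold N; lia).
  assert (BN' : forall f, BP (S r) f -> BP N f) by (intros; apply (BP_le (S r)); auto; unfold N; lia).
  assert (BP1 : BP N P1) by (apply (BP_mul r (S r)); auto).
  assert (BP2 : BP N P2) by (apply (BP_mul r (S r)); auto).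
  assert (BP11 : BP N P11) by (apply BPadd; [apply (BP_mul r (S r)); auto | apply (BP_le (r + r)); [unfold N; lia|apply (BP_mul r r); auto]]).
  assert (BP12 : BP N P12) by (apply BPadd; [apply (BP_mul r (S r)); auto | apply (BP_le (r + r)); [unfold N; lia|apply (BP_mul r r); auto]]).
  assert (BP21 : BP N P21) by (apply BPadd; [apply (BP_mul r (S r)); auto | apply (BP_le (r + r)); [unfold N; lia|apply (BP_mul r r); auto]]).
  assert (BP22 : BP N P22) by (apply BPadd; [apply (BP_mul r (S r)); auto | apply (BP_le (r + r)); [unfold N; lia|apply (BP_mul r r); auto]]).
  assert (PC1 := partials_comp P1 P11 P12 x1 (x2 - x1) (x3 - x1) y1 (y2 - y1) (y3 - y1) PP1).
  assert (PC2 := partials_comp P2 P21 P22 x1 (x2 - x1) (x3 - x1) y1 (y2 - y1) (y3 - y1) PP2).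
  assert (BX : forall f, BP N f -> BP N (fun p => f (X p))).
  { intros f Hf. exact (BP_comp N f x1 (x2 - x1) (x3 - x1) y1 (y2 - y1) (y3 - y1) Hf). }
  set (G1 := fun p => (y3 - y1) * P1 (X p) - (x3 - x1) * P2 (X p)).
  set (G2 := fun p => - (y2 - y1) * P1 (X p) + (x2 - x1) * P2 (X p)).
  set (g1 := fun p => (y3 - y1) * ((x2 - x1) * P11 (X p) + (y2 - y1) * P12 (X p))
                    - (x3 - x1) * ((x2 - x1) * P21 (X p) + (y2 - y1) * P22 (X p))).
  set (g2 := fun p => - (y2 - y1) * ((x3 - x1) * P11 (X p) + (y3 - y1) * P12 (X p))
                    + (x2 - x1) * ((x3 - x1) * P21 (X p) + (y3 - y1) * P22 (X p))).
  assert (BG1 : BP N G1) by (apply BP_sub; apply BP_scal; apply BX; auto).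
  assert (BG2 : BP N G2) by (apply BPadd; apply BP_scal; apply BX; auto).
  assert (Bg1 : BP N g1) by (apply BP_sub; apply BP_scal; apply BPadd; apply BP_scal; apply BX; auto).
  assert (Bg2 : BP N g2) by (apply BPadd; apply BP_scal; apply BPadd; apply BP_scal; apply BX; auto).
  assert (D1 : forall s t, is_derive (fun u => G1 (u, t)) s (g1 (s, t))).
  { intros s t. unfold G1, g1. apply isd_minus; apply isd_scal; [apply (pd1 _ _ _ s t PC1) | apply (pd1 _ _ _ s t PC2)]. }
  assert (D2 : forall s t, is_derive (fun u => G2 (s, u)) t (g2 (s, t))).
  { intros s t. unfold G2, g2. apply isd_plus; apply isd_scal; [apply (pd2 _ _ _ s t PC1) | apply (pd2 _ _ _ s t PC2)]. }
  assert (GR := green_ref N N N N G1 G2 g1 g2 BG1 BG2 Bg1 Bg2 D1 D2).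
  assert (Hd' : BP (S r) d) by (apply BP_S; auto).
  assert (E12 := edge_simp (x1, y1) (x2, y2) q d (S r) (edge_neq _ _ _ ND (or_introl (conj eq_refl eq_refl))) Hq1 Hq2 Hd'
                  (HE _ _ (or_introl (conj eq_refl eq_refl)) d (BP_poly2 r d Hd))).
  assert (E23 := edge_simp (x2, y2) (x3, y3) q d (S r) (edge_neq _ _ _ ND (or_intror (or_introl (conj eq_refl eq_refl)))) Hq1 Hq2 Hd'
                  (HE _ _ (or_intror (or_introl (conj eq_refl eq_refl))) d (BP_poly2 r d Hd))).
  assert (E31 := edge_simp (x3, y3) (x1, y1) q d (S r) (edge_neq _ _ _ ND (or_intror (or_intror (conj eq_refl eq_refl)))) Hq1 Hq2 Hd'
                  (HE _ _ (or_intror (or_intror (conj eq_refl eq_refl))) d (BP_poly2 r d Hd))).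
  assert (U12 := edge_UP (x1, y1) (x2, y2) q d (S r) Hq1 Hq2 Hd').
  assert (U23 := edge_UP (x2, y2) (x3, y3) q d (S r) Hq1 Hq2 Hd').
  assert (U31 := edge_UP (x3, y3) (x1, y1) q d (S r) Hq1 Hq2 Hd').
  simpl in E12, E23, E31, U12, U23, U31.
  set (F12 := fun s : R => (fst (q (x1 + s * (x2 - x1), y1 + s * (y2 - y1))) * (y2 - y1) -
        snd (q (x1 + s * (x2 - x1), y1 + s * (y2 - y1))) * (x2 - x1)) * d (x1 + s * (x2 - x1), y1 + s * (y2 - y1))) in E12, U12.
  set (F23 := fun s : R => (fst (q (x2 + s * (x3 - x2), y2 + s * (y3 - y2))) * (y3 - y2) -
        snd (q (x2 + s * (x3 - x2), y2 + s * (y3 - y2))) * (x3 - x2)) * d (x2 + s * (x3 - x2), y2 + s * (y3 - y2))) in E23, U23.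
  set (F31 := fun s : R => (fst (q (x3 + s * (x1 - x3), y3 + s * (y1 - y3))) * (y1 - y3) -
        snd (q (x3 + s * (x1 - x3), y3 + s * (y1 - y3))) * (x1 - x3)) * d (x3 + s * (x1 - x3), y3 + s * (y1 - y3))) in E31, U31.
  assert (B1 : RInt (fun s => G2 (s, 0)) 0 1 = 0).
  { rewrite (RInt_ext' _ (fun s => -1 * F12 s)). rewrite RInt_scal', E12. toR; ring. eapply UP_exRInt; eauto.
    intros s. unfold G2, F12, P1, P2.
    replace (X (s, 0)) with (x1 + s * (x2 - x1), y1 + s * (y2 - y1)) by (unfold X; simpl; peq). ring. }
  assert (B2 : RInt (fun s => G1 (s, 1 - s) + G2 (s, 1 - s)) 0 1 = 0).
  { rewrite (RInt_ext' _ (fun s => F23 (1 - s))). rewrite (RInt_flip _ _ U23). exact E23.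
    intros s. unfold G1, G2, F23, P1, P2.
    replace (X (s, 1 - s)) with (x2 + (1 - s) * (x3 - x2), y2 + (1 - s) * (y3 - y2)) by (unfold X; simpl; peq). ring. }
  assert (B3 : RInt (fun t => G1 (0, t)) 0 1 = 0).
  { rewrite (RInt_ext' _ (fun t => -1 * F31 (1 - t))). rewrite RInt_scal', (RInt_flip _ _ U31), E31. toR; ring.
    eapply UP_exRInt. eapply UP_ext. apply (UP_comp _ _ 1 (-1) U31). intros; simpl; f_equal; ring.
    intros t. unfold G1, F31, P1, P2.
    replace (X (0, t)) with (x3 + (1 - t) * (x1 - x3), y3 + (1 - t) * (y1 - y3)) by (unfold X; simpl; peq). ring. }
  assert (GZ : DI (fun p => g1 p + g2 p) = 0).
  { unfold DI. rewrite GR. rewrite RInt_minus'. rewrite B1, B2, B3. toR; ring.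
    apply (exR_line2 N (fun p => G1 p + G2 p) (fun s => (s, 1 - s)) 0 1 1 (-1)). apply BPadd; auto. intros; peq.
    apply (exR_line2 N G2 (fun s => (s, 0)) 0 1 0 0). auto. intros; peq. }
  assert (BdX : BP r (fun p => d (X p))) by exact (BP_comp r d x1 (x2 - x1) (x3 - x1) y1 (y2 - y1) (y3 - y1) Hd).
  assert (BxX : BP r (fun p => dx (X p))) by exact (BP_comp r dx x1 (x2 - x1) (x3 - x1) y1 (y2 - y1) (y3 - y1) Bdx).
  assert (ByX : BP r (fun p => dy (X p))) by exact (BP_comp r dy x1 (x2 - x1) (x3 - x1) y1 (y2 - y1) (y3 - y1) Bdy).
  assert (B1X : BP (S r) (fun p => fst (q (X p)))) by exact (BP_comp (S r) _ x1 (x2 - x1) (x3 - x1) y1 (y2 - y1) (y3 - y1) Hq1).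
  assert (B2X : BP (S r) (fun p => snd (q (X p)))) by exact (BP_comp (S r) _ x1 (x2 - x1) (x3 - x1) y1 (y2 - y1) (y3 - y1) Hq2).
  set (Jf := fun p => dx (X p) * fst (q (X p)) + dy (X p) * snd (q (X p))).
  assert (BJ : BP N Jf) by (apply BPadd; apply (BP_mul r (S r)); auto).
  assert (BDD : BP N (fun p => d (X p) * d (X p))) by (apply (BP_le (r + r)); [unfold N; lia | apply (BP_mul r r); auto]).
  assert (EG : DI (fun p => g1 p + g2 p) = det * (DI (fun p => d (X p) * d (X p)) + DI Jf)).
  { rewrite <- (DI_plus N _ _ BDD BJ), <- (DI_scal N). apply DI_ext. intros s t.
    unfold g1, g2, P11, P12, P21, P22, Jf, det. rewrite (Ed (X (s, t))). ring.
    apply BPadd; auto. }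
  assert (JZ : DI Jf = 0).
  { destruct r as [|r'].
    - apply DI_zero. intros p. unfold Jf. simpl in Hdx, Hdy. rewrite Hdx, Hdy. ring.
    - assert (HI' := HI (fun p => (dx p, dy p)) (conj (BP_poly2 _ _ Hdx) (BP_poly2 _ _ Hdy))).
      unfold tri_int, tdet, pdot, psub, padd, pscal, tv1, tv2, tv3 in HI'. simpl in HI'.
      assert (HJ : Rabs det * DI Jf = 0).
      { rewrite <- HI'. unfold DI. f_equal. apply RInt_ext'; intros s; apply RInt_ext'; intros t. unfold Jf.
        replace (X (s, t)) with (x1 + (s * (x2 - x1) + t * (x3 - x1)), y1 + (s * (y2 - y1) + t * (y3 - y1)))
          by (unfold X; simpl; peq). ring. }
      assert (0 < Rabs det) by (apply Rabs_pos_lt; auto). nra. }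
  assert (IZ : DI (fun p => d (X p) * d (X p)) = 0).
  { rewrite JZ, GZ, Rplus_0_r in EG. destruct (Rmult_integral _ _ (eq_sym EG)); [contradiction | auto]. }
  assert (Z := pos2 r (fun p => d (X p)) BdX IZ).
  assert (Z2 := UIT2 r _ BdX Z).
  intros p. rewrite <- Ed. destruct (X_inv x1 y1 x2 y2 x3 y3 Hdet p) as [s [t ->]].
  exact (Z2 (s, t)).
Qed.

Lemma isd_sum (F : nat -> R -> R) (F' : nat -> R) n x :
  (forall i, (i <= n)%nat -> is_derive (F i) x (F' i)) ->
  is_derive (fun t => sum_f_R0 (fun i => F i t) n) x (sum_f_R0 F' n).
Proof.
  induction n; intros H; simpl. apply H; lia.
  apply isd_plus. apply IHn; intros; apply H; lia. apply H; lia.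
Qed.

Lemma exR_sum (F : nat -> R -> R) n a b :
  (forall i, (i <= n)%nat -> ex_RInt (F i) a b) ->
  ex_RInt (fun t => sum_f_R0 (fun i => F i t) n) a b.
Proof.
  induction n; intros H; simpl. apply (ex_RInt_ext (F 0%nat)). intros; reflexivity. apply H; lia.
  apply (ex_RInt_plus (V := R_CompleteNormedModule) (fun t => sum_f_R0 (fun i => F i t) n) (F (S n))).
  apply IHn; intros; apply H; lia. apply H; lia.
Qed.

Lemma RInt_sum (F : nat -> R -> R) n a b :
  (forall i, (i <= n)%nat -> ex_RInt (F i) a b) ->
  RInt (fun t => sum_f_R0 (fun i => F i t) n) a b = sum_f_R0 (fun i => RInt (F i) a b) n.
Proof.
  induction n; intros H; simpl. apply RInt_ext'; auto.
  assert (X1 : ex_RInt (fun t => sum_f_R0 (fun i => F i t) n) a b) by (apply exR_sum; intros; apply H; lia).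
  rewrite (RInt_plus' _ _ _ _ X1 (H (S n) (le_n _))), IHn. reflexivity. intros; apply H; lia.
Qed.

Lemma isd_antider i x : is_derive (fun t => t ^ (S i) / INR (S i)) x (x ^ i).
Proof.
  assert (HN : INR (S i) <> 0) by (apply not_0_INR; lia).
  apply (isd_ext (fun t => / INR (S i) * t ^ S i) _ x (/ INR (S i) * (INR (S i) * 1 * x ^ pred (S i)))).
  + intros; unfold Rdiv; ring.
  + simpl pred; field; auto.
  + apply isd_scal. apply (is_derive_pow (fun t => t) (S i) x 1), isd_id.
Qed.

Lemma BP_powf (g : pt -> R) m : BP 1 g -> BP m (fun p => g p ^ m).
Proof.
  intros H. induction m. exact (BPc 0 1). simpl. apply (BP_mul 1 m); auto.
Qed.

Lemma isd_uniq (f : R -> R) x l1 l2 : is_derive f x l1 -> is_derive f x l2 -> l1 = l2.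
Proof. intros H1 H2. rewrite <- (is_derive_unique _ _ _ H1). now apply is_derive_unique. Qed.

Definition W0 r (a b : nat -> nat -> R) (x : pt) :=
  sum_f_R0 (fun i => sum_f_R0 (fun j => b i j * (fst x ^ S i / INR (S i)) * snd x ^ j) (S r - i)) (S r)
  + sum_f_R0 (fun j => - a 0%nat j * (snd x ^ S j / INR (S j))) (S r).

Lemma W0_BP r a b C : BP (S (S r)) (fun x => W0 r a b x + C).
Proof.
  apply BPadd. 2: apply BPc. apply BPadd.
  - apply BP_sum. intros i Hi. apply BP_sum. intros j Hj. eapply BP_ext.
    apply (BP_mono _ (b i j / INR (S i)) (S i) j). lia. intros; simpl; unfold Rdiv; ring.
  - apply BP_sum. intros j Hj. eapply BP_ext.
    apply (BP_mono _ (- a 0%nat j / INR (S j)) 0 (S j)). lia. intros; simpl; unfold Rdiv; ring.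
Qed.

Lemma P2sum_0 k a y : P2sum (S k) a (0, y) = sum_f_R0 (fun j => a 0%nat j * y ^ j) (S k).
Proof.
  unfold P2sum. rewrite sum_S. rewrite (sum_zero (fun i => sum_f_R0 _ _)). rewrite Rplus_0_r.
  apply sum_eq. intros; simpl; ring.
  intros i Hi. apply sum_zero. intros; simpl; ring.
Qed.

Lemma P2sum_d1 k c x y : is_derive (fun t => P2sum k c (t, y)) x
  (sum_f_R0 (fun i => sum_f_R0 (fun j => c i j * (INR i * 1 * x ^ pred i) * y ^ j) (k - i)) k).
Proof.
  unfold P2sum. apply isd_sum. intros i _. apply isd_sum. intros j _.
  apply (isd_ext (fun t => (c i j * y ^ j) * t ^ i) _ x ((c i j * y ^ j) * (INR i * 1 * x ^ pred i))).
  intros; simpl; ring. ring. apply isd_scal. apply (is_derive_pow (fun t => t) i x 1), isd_id.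
Qed.

Lemma P2sum_d2 k c x y : is_derive (fun t => P2sum k c (x, t)) y
  (sum_f_R0 (fun i => sum_f_R0 (fun j => c i j * x ^ i * (INR j * 1 * y ^ pred j)) (k - i)) k).
Proof.
  unfold P2sum. apply isd_sum. intros i _. apply isd_sum. intros j _.
  apply (isd_ext (fun t => (c i j * x ^ i) * t ^ j) _ y ((c i j * x ^ i) * (INR j * 1 * y ^ pred j))).
  intros; simpl; ring. ring. apply isd_scal. apply (is_derive_pow (fun t => t) j y 1), isd_id.
Qed.

Lemma potential r (q : pt -> pt) a b q11 q12 q21 q22 C :
  (forall x, fst (q x) = P2sum (S r) a x) -> (forall x, snd (q x) = P2sum (S r) b x) ->
  partials (fun x => fst (q x)) q11 q12 -> partials (fun x => snd (q x)) q21 q22 ->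
  BP r q11 -> (forall p, q11 p + q22 p = 0) ->
  forall x, q x = gradperp (fun x => W0 r a b x + C) x.
Proof.
  intros Ha Hb P1 P2 B11 Hdiv [x y].
  assert (D1 : is_derive (fun t => W0 r a b (t, y) + C) x (snd (q (x, y)))).
  { rewrite Hb. unfold W0, P2sum. simpl fst; simpl snd.
    eapply isd_ext. intros; reflexivity. 2: apply isd_plus. 3: apply isd_const. 2: apply isd_plus.
    3: apply isd_const. 2: apply isd_sum; intros i _; apply isd_sum; intros j _.
    2: apply (isd_ext (fun t => (b i j * y ^ j) * (t ^ S i / INR (S i))) _ x ((b i j * y ^ j) * x ^ i)).
    2: intros; ring. 2: reflexivity. 2: apply isd_scal, isd_antider.
    rewrite Rplus_0_r, Rplus_0_r. apply sum_eq; intros; apply sum_eq; intros; ring. }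
  assert (Q22 : forall t, q22 (t, y) =
     sum_f_R0 (fun i => sum_f_R0 (fun j => b i j * t ^ i * (INR j * 1 * y ^ pred j)) (S r - i)) (S r)).
  { intros t. apply (isd_uniq (fun u => snd (q (t, u))) y). apply (pd2 _ _ _ t y P2).
    apply (is_derive_ext (fun u => P2sum (S r) b (t, u))). intros; rewrite Hb; auto. apply P2sum_d2. }
  assert (I22 : RInt (fun t => q22 (t, y)) 0 x =
     sum_f_R0 (fun i => sum_f_R0 (fun j => b i j * (x ^ S i / INR (S i)) * (INR j * 1 * y ^ pred j)) (S r - i)) (S r)).
  { rewrite (RInt_ext' _ _ _ _ Q22). rewrite RInt_sum. apply sum_eq; intros i Hi. rewrite RInt_sum.
    apply sum_eq; intros j Hj.
    rewrite (RInt_ext' _ (fun t => (b i j * (INR j * 1 * y ^ pred j)) * t ^ i)) by (intros; ring).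
    rewrite int_Kpow. ring.
    intros j _. eapply UP_exRInt. eapply UP_ext. apply (UP_scal _ (b i j * (INR j * 1 * y ^ pred j))), (UP_pow i).
    intros; cbv beta; ring.
    intros i _. apply exR_sum. intros j _.
    eapply UP_exRInt. eapply UP_ext. apply (UP_scal _ (b i j * (INR j * 1 * y ^ pred j))), (UP_pow i).
    intros; cbv beta; ring. }
  assert (I11 : RInt (fun t => q11 (t, y)) 0 x = fst (q (x, y)) - fst (q (0, y))).
  { apply (FTC (fun t => fst (q (t, y)))). intros; apply (pd1 _ _ _ _ _ P1).
    intros; apply (UP_cont r), BP_UP1; auto. }
  assert (I2 : RInt (fun t => q22 (t, y)) 0 x = - RInt (fun t => q11 (t, y)) 0 x).
  { rewrite (RInt_ext' _ (fun t => -1 * q11 (t, y))). rewrite RInt_scal'. toR; ring.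
    eapply UP_exRInt, BP_UP1; eauto. intros t. specialize (Hdiv (t, y)). lra. }
  assert (Q10 : fst (q (0, y)) = sum_f_R0 (fun j => a 0%nat j * y ^ j) (S r)).
  { rewrite Ha. apply P2sum_0. }
  assert (D2 : is_derive (fun t => W0 r a b (x, t) + C) y (- fst (q (x, y)))).
  { unfold W0. simpl fst; simpl snd.
    eapply isd_ext. intros; reflexivity. 2: apply isd_plus. 3: apply isd_const. 2: apply isd_plus.
    2: apply isd_sum; intros i _; apply isd_sum; intros j _.
    2: apply (isd_ext (fun t => (b i j * (x ^ S i / INR (S i))) * t ^ j) _ y
               ((b i j * (x ^ S i / INR (S i))) * (INR j * 1 * y ^ pred j))).
    2: intros; ring. 2: reflexivity. 2: apply isd_scal, (is_derive_pow (fun t => t)), isd_id.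
    2: apply isd_sum; intros j _.
    2: apply (isd_ext (fun t => (- a 0%nat j) * (t ^ S j / INR (S j))) _ y ((- a 0%nat j) * y ^ j)).
    2: intros; ring. 2: reflexivity. 2: apply isd_scal, isd_antider.
    assert (E1 : sum_f_R0 (fun i => sum_f_R0 (fun j => b i j * (x ^ S i / INR (S i)) * (INR j * 1 * y ^ pred j)) (S r - i)) (S r)
                 = - (fst (q (x, y)) - fst (q (0, y)))).
    { rewrite <- I22, I2, I11. ring. }
    assert (E2 : sum_f_R0 (fun j => - a 0%nat j * y ^ j) (S r) = - fst (q (0, y))).
    { rewrite Q10. rewrite (sum_eq _ (fun j => (a 0%nat j * y ^ j) * -1)) by (intros; ring).
      rewrite <- scal_sum. ring. }
    rewrite E1, E2. ring. }
  unfold gradperp. simpl fst; simpl snd. cbv beta.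
  replace (Derive (fun t : R => W0 r a b (t, y) + C) x) with (snd (q (x, y))) by (symmetry; apply is_derive_unique; exact D1).
  replace (Derive (fun t : R => W0 r a b (x, t) + C) y) with (- fst (q (x, y))) by (symmetry; apply is_derive_unique; exact D2).
  destruct (q (x, y)) as [u v]. simpl. f_equal. ring.
Qed.

Lemma edge_const r (T : tri2) (q : pt -> pt) (w : pt -> R) a b :
  nondegenerate T -> is_edge T a b -> is_RT_interp r T q (fun _ => (0, 0)) ->
  BP (S r) (fun x => fst (q x)) -> BP (S r) (fun x => snd (q x)) ->
  BP (S (S r)) w -> (forall x, q x = gradperp w x) ->
  exists c, forall s, w (padd a (pscal s (psub b a))) = w a + c * lobatto_poly r s.
Proof.
  intros ND HEd [_ [HE _]] Hq1 Hq2 Hw Hg.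
  destruct (BP_partials _ _ Hw) as [w1 [w2 [_ [_ Pw]]]].
  assert (W1 : forall p, w1 p = snd (q p)).
  { intros [x y]. rewrite Hg. unfold gradperp; simpl. symmetry. apply is_derive_unique. apply (pd1 _ _ _ x y Pw). }
  assert (W2 : forall p, w2 p = - fst (q p)).
  { intros [x y]. rewrite Hg. unfold gradperp; simpl. replace (Derive (fun t : R => w (x, t)) y) with (w2 (x, y)) by (symmetry; apply is_derive_unique; apply (pd2 _ _ _ x y Pw)). ring. }
  assert (Hab := edge_neq T a b ND HEd).
  destruct a as [a1 a2], b as [b1 b2]. simpl.
  set (D := (b1 - a1) * (b1 - a1) + (b2 - a2) * (b2 - a2)).
  assert (HD : 0 < D).
  { unfold D. destruct (Req_dec a1 b1) as [e1|e1]; destruct (Req_dec a2 b2) as [e2|e2].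
    - subst; congruence.
    - assert (0 < (b2 - a2) * (b2 - a2)) by (apply Rsqr_pos_lt; intro; apply e2; lra). nra.
    - assert (0 < (b1 - a1) * (b1 - a1)) by (apply Rsqr_pos_lt; intro; apply e1; lra). nra.
    - assert (0 < (b1 - a1) * (b1 - a1)) by (apply Rsqr_pos_lt; intro; apply e1; lra). nra. }
  set (phi := fun s => w (a1 + s * (b1 - a1), a2 + s * (b2 - a2))).
  set (phi1 := fun s => (b1 - a1) * w1 (a1 + s * (b1 - a1), a2 + s * (b2 - a2))
                      + (b2 - a2) * w2 (a1 + s * (b1 - a1), a2 + s * (b2 - a2))).
  assert (Hphi : UP (S (S r)) phi) by (apply BP_line; auto).
  assert (Dphi : forall s, is_derive phi s (phi1 s)) by (intros; apply Pw).
  assert (Orth : forall m, (m <= r)%nat -> RInt (fun s => phi1 s * s ^ m) 0 1 = 0).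
  { intros m Hm.
    set (v := fun x : pt => (((fst x - a1) * (b1 - a1) + (snd x - a2) * (b2 - a2)) / D) ^ m).
    assert (Bv : BP m v).
    { apply BP_powf. eapply BP_ext.
      apply (BP_aff (- (a1 * (b1 - a1) + a2 * (b2 - a2)) / D) ((b1 - a1) / D) ((b2 - a2) / D)).
      intros; cbv beta; field. lra. }
    assert (Bvr : BP r v) by (apply (BP_le m); auto).
    assert (Bv' : BP (S r) v) by (apply BP_S; auto).
    assert (Ev := edge_simp (a1, a2) (b1, b2) q v (S r) Hab Hq1 Hq2 Bv'
                   (HE (a1, a2) (b1, b2) HEd v (BP_poly2 r v Bvr))).
    assert (Uv := edge_UP (a1, a2) (b1, b2) q v (S r) Hq1 Hq2 Bv').
    simpl in Ev, Uv.
    rewrite (RInt_ext' _ (fun s => -1 * ((fst (q (a1 + s * (b1 - a1), a2 + s * (b2 - a2))) * (b2 - a2) -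
        snd (q (a1 + s * (b1 - a1), a2 + s * (b2 - a2))) * (b1 - a1)) * v (a1 + s * (b1 - a1), a2 + s * (b2 - a2))))).
    rewrite RInt_scal', Ev. toR; ring. eapply UP_exRInt; eauto.
    intros s. unfold phi1. rewrite W1, W2. unfold v. simpl.
    replace (((a1 + s * (b1 - a1) - a1) * (b1 - a1) + (a2 + s * (b2 - a2) - a2) * (b2 - a2)) / D) with s
      by (unfold D in *; field; lra). ring. }
  destruct (lobatto_1d r phi phi1 Hphi Dphi Orth) as [c Hc]. exists c. intros s.
  change (phi s = w (a1, a2) + c * lobatto_poly r s). rewrite Hc. unfold phi. replace (a1 + 0 * (b1 - a1), a2 + 0 * (b2 - a2)) with (a1, a2) by peq. reflexivity.
Qed.

Theorem lemma4p2 (Th : list tri2) (z : pt) (r : nat) (q : pt -> pt) :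
  triangulation Th ->
  (exists T, In T Th /\ is_vertex z T) ->
  is_poly2_vec (r + 1) q ->
  (forall T, In T Th -> is_vertex z T -> is_RT_interp r T q (fun _ => (0, 0))) ->
  exists w : pt -> R,
    is_poly2 (r + 2) w /\
    (forall x, q x = gradperp w x) /\
    (forall T, In T Th -> is_vertex z T ->
       forall a b, is_edge T a b ->
       forall l, lobatto_point r a b l -> w l = 0).
Proof.
  intros [Hnd _] [T0 [HT0 Hz0]] [Hq1 Hq2] HRT.
  replace (r + 1)%nat with (S r) in Hq1, Hq2 by lia.
  assert (B1 := poly2_BP _ _ Hq1). assert (B2 := poly2_BP _ _ Hq2).
  destruct Hq1 as [a Ha], Hq2 as [b Hb].
  destruct (BP_partials _ _ B1) as [q11 [q12 [H11 [H12 Pq1]]]].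
  destruct (BP_partials _ _ B2) as [q21 [q22 [H21 [H22 Pq2]]]].
  simpl in H11, H12, H21, H22.
  assert (Hdiv := div_free r T0 q q11 q12 q21 q22 (Hnd T0 HT0) B1 B2 H11 H12 H21 H22 Pq1 Pq2 (HRT T0 HT0 Hz0)).
  set (w := fun x => W0 r a b x + - W0 r a b z).
  assert (Bw : BP (S (S r)) w) by apply W0_BP.
  assert (Gq : forall x, q x = gradperp w x).
  { apply (potential r q a b q11 q12 q21 q22); auto. }
  exists w. split; [|split].
  - replace (r + 2)%nat with (S (S r)) by lia. apply BP_poly2, Bw.
  - exact Gq.
  - intros T HT HzT a0 b0 Hedge l [s [Hs ->]].
    assert (EC : forall e1 e2, is_edge T e1 e2 -> exists c, forall s,
              w (padd e1 (pscal s (psub e2 e1))) = w e1 + c * lobatto_poly r s).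
    { intros e1 e2 He. apply (edge_const r T q w e1 e2 (Hnd T HT) He (HRT T HT HzT) B1 B2 Bw Gq). }
    assert (V : forall e1 e2, is_edge T e1 e2 -> w e2 = w e1).
    { intros e1 e2 He. destruct (EC e1 e2 He) as [c Hc]. specialize (Hc 1).
      rewrite lob_1 in Hc. replace (padd e1 (pscal 1 (psub e2 e1))) with e2 in Hc. lra.
      destruct e1, e2. unfold padd, pscal, psub; simpl. peq. }
    assert (V12 := V _ _ (or_introl (conj eq_refl eq_refl))).
    assert (V23 := V _ _ (or_intror (or_introl (conj eq_refl eq_refl)))).
    assert (Wz : w z = 0) by (unfold w; ring).
    assert (Wv : w (tv1 T) = 0 /\ w (tv2 T) = 0 /\ w (tv3 T) = 0).
    { destruct HzT as [E|[E|E]]; rewrite <- E in *; lra. }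
    destruct (EC a0 b0 Hedge) as [c Hc]. rewrite Hc, Hs.
    destruct Hedge as [[-> _]|[[-> _]|[-> _]]]; lra.
Qed.
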